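(* For complex parameters $a,c$, \begin{align*} \sum_{n=0}^\infty \sum_{j=-n}^n (-1)^j \bigl(1-q^{4n+2}\bigr)q^{j^2-2n}\frac{\bigl(q^2/a, q^2/c; q^2\bigr)_n (ac)^n}{\bigl(q^2a, q^2c; q^2\bigr)_n} =\frac{\bigl(q^2, ac; q^2\bigr)_\infty}{\bigl(q^2a, q^2c; q^2\bigr)_\infty}\sum_{n=0}^\infty \frac{\bigl(q^2/a, q^2/c, q; q^2\bigr)_n}{(-q; q)_{2n} \bigl(q^2; q^2\bigr)_n}\biggl(\frac{ac}{q^2}\biggr)^n. \end{align*}
   Context: Throughout, $q$ is a complex number with $0<|q|<1$. For $x\in\mathbb{C}$ and base $p\in\{q,q^2\}$, $(x;p)_\infty=\prod_{k=0}^\infty(1-xp^k)$ and, for an integer $n\ge 0$, $(x;p)_n=\prod_{k=0}^{n-1}(1-xp^k)$; also $(x_1,\dots,x_m;p)_n=(x_1;p)_n\cdots(x_m;p)_n$ for $n$ an integer or $\infty$. *)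

(* Defs.v *)
From Stdlib Require Import Reals ZArith.
From Coquelicot Require Import Coquelicot.
Open Scope C_scope.

Fixpoint qpoch (x p : C) (n : nat) : C :=
  match n with
  | O => 1
  | S m => qpoch x p m * (1 - x * p ^ m)
  end.

(* infinite q-Pochhammer (x;p)_oo = lim_n (x;p)_n, taken componentwise
   (the limit exists whenever |p| < 1). *)
Definition qpoch_inf (x p : C) : C :=
  (real (Lim_seq (fun n => fst (qpoch x p n))),
   real (Lim_seq (fun n => snd (qpoch x p n)))).

(* summand of the left-hand side, index j = i - n with i = 0..2n *)
Definition lhs_inner (q a c : C) (n i : nat) : C :=
  let j := (Z.of_nat i - Z.of_nat n)%Z in
  (-1) ^ (Z.abs_nat j) * (1 - q ^ (4 * n + 2)) * (q ^ (Z.abs_nat j * Z.abs_nat j) / q ^ (2 * n))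
  * (qpoch (q ^ 2 / a) (q ^ 2) n * qpoch (q ^ 2 / c) (q ^ 2) n * (a * c) ^ n)
  / (qpoch (q ^ 2 * a) (q ^ 2) n * qpoch (q ^ 2 * c) (q ^ 2) n).

Definition lhs_term (q a c : C) (n : nat) : C :=
  sum_n (lhs_inner q a c n) (2 * n).

Definition rhs_term (q a c : C) (n : nat) : C :=
  qpoch (q ^ 2 / a) (q ^ 2) n * qpoch (q ^ 2 / c) (q ^ 2) n * qpoch q (q ^ 2) n
  / (qpoch (- q) q (2 * n) * qpoch (q ^ 2) (q ^ 2) n)
  * (a * c / q ^ 2) ^ n.

Definition rhs_prefactor (q a c : C) : C :=
  qpoch_inf (q ^ 2) (q ^ 2) * qpoch_inf (a * c) (q ^ 2)
  / (qpoch_inf (q ^ 2 * a) (q ^ 2) * qpoch_inf (q ^ 2 * c) (q ^ 2)).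

(* Main.v *)
Require Import Defs.
From Stdlib Require Import Reals ZArith Lia Lra.
From Coquelicot Require Import Coquelicot.
Open Scope C_scope.

Module A1.
Local Open Scope C_scope.

Fixpoint ssum (f : nat -> C) (n : nat) : C :=
  match n with O => 0 | S m => ssum f m + f m end.

Lemma ssum_ext f g n : (forall k, (k < n)%nat -> f k = g k) -> ssum f n = ssum g n.
Proof.
  induction n; intros H; simpl; auto.
  rewrite IHn by (intros; apply H; lia). rewrite H by lia. reflexivity.
Qed.

Lemma ssum_plus f g n : ssum (fun k => f k + g k) n = ssum f n + ssum g n.
Proof. induction n; simpl. ring. rewrite IHn. ring. Qed.

Lemma ssum_scal c f n : ssum (fun k => c * f k) n = c * ssum f n.
Proof. induction n; simpl. ring. rewrite IHn. ring. Qed.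

Lemma ssum_shift f n : ssum f (S n) = f O + ssum (fun k => f (S k)) n.
Proof. induction n; simpl in *. ring. rewrite IHn. ring. Qed.

Lemma ssum_split f m n : ssum f (m + n) = ssum f m + ssum (fun k => f (m + k)%nat) n.
Proof. induction n; simpl. rewrite Nat.add_0_r. ring.
  rewrite Nat.add_succ_r. simpl. rewrite IHn. ring. Qed.

Lemma ssum_zero n : ssum (fun _ => 0) n = 0.
Proof. induction n; simpl; auto. rewrite IHn; ring. Qed.

Lemma sum_n_ssum (f : nat -> C) n : sum_n f n = ssum f (S n).
Proof.
  induction n. rewrite sum_O. simpl. ring.
  rewrite sum_Sn, IHn. reflexivity.
Qed.

Lemma ssum_swap_tri (g : nat -> nat -> C) N :
  ssum (fun k => ssum (fun r => g k r) (S k)) (S N) =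
  ssum (fun r => ssum (fun m => g (r + m)%nat r) (S (N - r))) (S N).
Proof.
  induction N.
  - simpl. ring.
  - change (ssum (fun k => ssum (fun r => g k r) (S k)) (S (S N))) with
      (ssum (fun k => ssum (fun r => g k r) (S k)) (S N) + ssum (fun r => g (S N) r) (S (S N))).
    rewrite IHN.
    change (ssum (fun r : nat => ssum (fun m : nat => g (r + m)%nat r) (S (S N - r))) (S (S N)))
      with (ssum (fun r : nat => ssum (fun m : nat => g (r + m)%nat r) (S (S N - r))) (S N)
            + ssum (fun m : nat => g (S N + m)%nat (S N)) (S (S N - S N))).
    replace (S N - S N)%nat with O by lia.
    assert (E: ssum (fun r : nat => ssum (fun m : nat => g (r + m)%nat r) (S (S N - r))) (S N) =
      ssum (fun r : nat => ssum (fun m : nat => g (r + m)%nat r) (S (N - r)) + g (S N) r) (S N)).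
    { apply ssum_ext. intros k Hk. replace (S N - k)%nat with (S (N - k)) by lia.
      change (ssum (fun m : nat => g (k + m)%nat k) (S (S (N - k)))) with
        (ssum (fun m : nat => g (k + m)%nat k) (S (N - k)) + g (k + S (N - k))%nat k).
      replace (k + S (N - k))%nat with (S N) by lia. reflexivity. }
    rewrite E, ssum_plus.
    change (ssum (fun r : nat => g (S N) r) (S (S N))) with
      (ssum (fun r : nat => g (S N) r) (S N) + g (S N) (S N)).
    simpl (ssum (fun m : nat => g (S N + m)%nat (S N)) 1). rewrite Nat.add_0_r. change (ssum (fun r : nat => g (S N) r) (S N)) with (ssum (g (S N)) (S N)). ring.
Qed.

Lemma qpoch_add x p m n : qpoch x p (m + n) = qpoch x p m * qpoch (x * p ^ m) p n.
Proof.
  induction n; simpl. rewrite Nat.add_0_r. ring.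
  rewrite Nat.add_succ_r. simpl. rewrite IHn, Cpow_add_r. ring.
Qed.

Lemma qpoch_Sl x p n : qpoch x p (S n) = (1 - x) * qpoch (x * p) p n.
Proof.
  change (S n) with (1 + n)%nat. rewrite qpoch_add. simpl. f_equal; [ring|]. f_equal. ring.
Qed.

Lemma qpoch_nz x p n : (forall k, (k < n)%nat -> x * p ^ k <> 1) -> qpoch x p n <> 0.
Proof.
  induction n; intros H; simpl. 
  - intro E. injection E. intros. lra.
  - apply Cmult_neq_0. apply IHn; intros; apply H; lia.
    intro E. apply (H n). lia. 
    replace (x * p ^ n) with (1 - (1 - x * p ^ n)) by ring. rewrite E. ring.
Qed.

End A1.
Import A1.

Module A2.
Local Open Scope C_scope.

Definition qb (Q : C) (M m : nat) : C :=
  qpoch Q Q M / (qpoch Q Q m * qpoch Q Q (M - m)).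

Lemma Cmult_neq_0_inv (a b : C) : a * b <> 0 -> a <> 0 /\ b <> 0.
Proof. intros H; split; intro E; apply H; rewrite E; ring. Qed.

Section QB.
Variable Q : C.
Hypothesis HQ : forall k, qpoch Q Q k <> 0.

Lemma HQS k : qpoch Q Q k <> 0 /\ 1 - Q * Q ^ k <> 0.
Proof. apply Cmult_neq_0_inv. apply (HQ (S k)). Qed.

Lemma qb_0 M : qb Q M 0 = 1.
Proof. unfold qb. rewrite Nat.sub_0_r. simpl. field. apply HQ. Qed.

Lemma qb_diag M : qb Q M M = 1.
Proof. unfold qb. rewrite Nat.sub_diag. simpl. field. apply HQ. Qed.

Lemma qb_P1 j l : qb Q (S (S (j + l))) (S j) = Q ^ (S j) * qb Q (S (j + l)) (S j) + qb Q (S (j + l)) j.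
Proof.
  unfold qb.
  replace (S (S (j + l)) - S j)%nat with (S l) by lia.
  replace (S (j + l) - S j)%nat with l by lia.
  replace (S (j + l) - j)%nat with (S l) by lia.
  destruct (HQS j) as [H1 H2]. destruct (HQS l) as [H3 H4].
  destruct (HQS (j + l)) as [H5 H6].
  simpl. rewrite Cpow_add_r. field. repeat split; auto.
Qed.

Lemma qb_P2 j l : qb Q (S (S (j + l))) (S j) = qb Q (S (j + l)) (S j) + Q ^ (S l) * qb Q (S (j + l)) j.
Proof.
  unfold qb.
  replace (S (S (j + l)) - S j)%nat with (S l) by lia.
  replace (S (j + l) - S j)%nat with l by lia.
  replace (S (j + l) - j)%nat with (S l) by lia.
  destruct (HQS j) as [H1 H2]. destruct (HQS l) as [H3 H4].
  destruct (HQS (j + l)) as [H5 H6].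
  simpl. rewrite Cpow_add_r. field. repeat split; auto.
Qed.

Lemma qb_sym N i : (i <= N)%nat -> qb Q N i = qb Q N (N - i).
Proof. intros H. unfold qb. replace (N - (N - i))%nat with i by lia.
  rewrite (Cmult_comm (qpoch Q Q i)). reflexivity. Qed.

End QB.

End A2.
Import A2.

Module A3.
Local Open Scope C_scope.

Section Saal.
Variable Q B D : C.
Hypothesis HQ : forall k, qpoch Q Q k <> 0.

Definition st (x : C) (M m : nat) : C :=
  qb Q M m * qpoch B Q m * qpoch D Q m * x ^ m * qpoch x Q (M - m)
  * qpoch (x * B * D * Q ^ m) Q (M - m).

Definition sA (x : C) (M m : nat) : C :=
  qb Q M m * qpoch B Q m * qpoch D Q m * x ^ m * (Q ^ m - x) * qpoch (x * Q) Q (M - m)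
  * qpoch (x * B * D * Q ^ m) Q (S (M - m)).

Definition sC (x : C) (M m : nat) : C :=
  match m with O => 0 | S j =>
  qb Q M j * qpoch B Q (S j) * qpoch D Q (S j) * x ^ (S j) * qpoch (x * Q) Q (M - j)
  * qpoch (x * B * D * Q ^ (S j)) Q (M - j) end.

Lemma sL1 x M : st x (S M) 0 = sA x M 0.
Proof.
  unfold st, sA. rewrite !qb_0 by auto. rewrite !Nat.sub_0_r.
  rewrite qpoch_Sl. simpl. ring.
Qed.

Lemma sL3 x M : st x (S M) (S M) = sC x M (S M).
Proof.
  unfold st, sC. rewrite !qb_diag by auto. rewrite !Nat.sub_diag. simpl. ring.
Qed.

Lemma sL2 x M j : (j < M)%nat -> st x (S M) (S j) = sA x M (S j) + sC x M (S j).
Proof.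
  intros Hj. destruct (Nat.le_exists_sub (S j) M Hj) as [l [El _]].
  replace M with (S (j + l)) in * by lia. clear El Hj.
  unfold st, sA, sC.
  replace (S (S (j + l)) - S j)%nat with (S l) by lia.
  replace (S (j + l) - S j)%nat with l by lia.
  replace (S (j + l) - j)%nat with (S l) by lia.
  assert (E: qb Q (S (S (j + l))) (S j) * (1 - x) =
    qb Q (S (j + l)) (S j) * (Q ^ (S j) - x) + qb Q (S (j + l)) j * (1 - x * Q ^ (S l))).
  { replace (qb Q (S (S (j + l))) (S j) * (1 - x)) with
      (qb Q (S (S (j + l))) (S j) - x * qb Q (S (S (j + l))) (S j)) by ring.
    rewrite (qb_P1 Q HQ j l) at 1. rewrite (qb_P2 Q HQ j l). ring. }
  rewrite (qpoch_Sl x Q l).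
  change (qpoch (x * Q) Q (S l)) with (qpoch (x * Q) Q l * (1 - x * Q * Q ^ l)).
  set (P := qpoch (x * B * D * Q ^ S j) Q (S l)).
  set (bb := qb Q (S (S (j + l))) (S j)) in *.
  transitivity ((bb * (1 - x)) * (qpoch B Q (S j) * qpoch D Q (S j) * x ^ S j * qpoch (x * Q) Q l * P)).
  ring. rewrite E. simpl (Q ^ S l). ring.
Qed.

Lemma sL4 x M m : (m <= M)%nat ->
  sA x M m + sC x M (S m) = (1 - x * B) * (1 - x * D) * st (x * Q) M m.
Proof.
  intros Hm. destruct (Nat.le_exists_sub m M Hm) as [l [El _]].
  subst M. unfold sA, sC, st.
  replace (l + m - m)%nat with l by lia.
  rewrite qpoch_Sl.
  replace (x * B * D * Q ^ m * Q) with (x * B * D * Q ^ S m) by (simpl; ring).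
  replace (x * Q * B * D * Q ^ m) with (x * B * D * Q ^ S m) by (simpl; ring).
  rewrite Cpow_mult_l. simpl. ring.
Qed.

Theorem saal M : forall x, ssum (st x M) (S M) = qpoch (x * B) Q M * qpoch (x * D) Q M.
Proof.
  induction M; intros x.
  - simpl. unfold st. rewrite qb_0 by auto. simpl. ring.
  - rewrite ssum_shift.
    change (ssum (fun k => st x (S M) (S k)) (S M)) with
      (ssum (fun k => st x (S M) (S k)) M + st x (S M) (S M)).
    rewrite (ssum_ext (fun k => st x (S M) (S k)) (fun k => sA x M (S k) + sC x M (S k)))
      by (intros; apply sL2; auto).
    rewrite sL1, sL3, ssum_plus.
    transitivity (ssum (sA x M) (S M) + ssum (fun k => sC x M (S k)) (S M)).
    { rewrite (ssum_shift (sA x M)). simpl. ring. }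
    rewrite <- ssum_plus.
    rewrite (ssum_ext _ (fun k => (1 - x * B) * (1 - x * D) * st (x * Q) M k))
      by (intros; apply sL4; lia).
    rewrite ssum_scal, IHM.
    rewrite !qpoch_Sl.
    replace (x * Q * B) with (x * B * Q) by ring.
    replace (x * Q * D) with (x * D * Q) by ring. ring.
Qed.

End Saal.

End A3.
Import A3.

Module A4.
Local Open Scope C_scope.

Section PS.
Variable Q : C.
Hypothesis HQ : forall k, qpoch Q Q k <> 0.

Lemma PS1 (f : nat -> C) N :
  ssum (fun i => f i * qb Q (S N) i) (S (S N)) =
  ssum (fun i => f i * Q ^ i * qb Q N i) (S N) + ssum (fun i => f (S i) * qb Q N i) (S N).
Proof.
  rewrite ssum_shift.
  change (ssum (fun k => f (S k) * qb Q (S N) (S k)) (S N)) with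
    (ssum (fun k => f (S k) * qb Q (S N) (S k)) N + f (S N) * qb Q (S N) (S N)).
  rewrite (ssum_ext (fun k => f (S k) * qb Q (S N) (S k))
     (fun k => f (S k) * Q ^ (S k) * qb Q N (S k) + f (S k) * qb Q N k)).
  2:{ intros k Hk. destruct (Nat.le_exists_sub (S k) N Hk) as [l [El _]].
      replace N with (S (k + l)) by lia. rewrite (qb_P1 Q HQ k l). ring. }
  rewrite ssum_plus. rewrite (ssum_shift (fun i => f i * Q ^ i * qb Q N i)).
  simpl ssum at 3. rewrite !qb_0, !qb_diag by auto. simpl. rewrite ?qb_diag by auto. ring.
Qed.

Lemma PS2 (f : nat -> C) N :
  ssum (fun i => f i * qb Q (S N) i) (S (S N)) =
  ssum (fun i => f i * qb Q N i) (S N) + ssum (fun i => f (S i) * Q ^ (N - i) * qb Q N i) (S N).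
Proof.
  rewrite ssum_shift.
  change (ssum (fun k => f (S k) * qb Q (S N) (S k)) (S N)) with
    (ssum (fun k => f (S k) * qb Q (S N) (S k)) N + f (S N) * qb Q (S N) (S N)).
  rewrite (ssum_ext (fun k => f (S k) * qb Q (S N) (S k))
     (fun k => f (S k) * qb Q N (S k) + f (S k) * Q ^ (N - k) * qb Q N k)).
  2:{ intros k Hk. destruct (Nat.le_exists_sub (S k) N Hk) as [l [El _]].
      replace N with (S (k + l)) by lia. rewrite (qb_P2 Q HQ k l).
      replace (S (k + l) - k)%nat with (S l) by lia. ring. }
  rewrite ssum_plus. rewrite (ssum_shift (fun i => f i * qb Q N i)).
  simpl ssum at 3. rewrite !qb_0 by auto. simpl. rewrite ?qb_diag, ?Nat.sub_diag by auto. simpl. ring.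
Qed.

End PS.

Lemma m1sq i : (-1) ^ i * (-1) ^ i = 1.
Proof. rewrite <- Cpow_mult_l. replace ((-1) * (-1) : C) with (1 : C) by ring. apply Cpow_1_l. Qed.

Lemma cpow2 (q : C) k : (q ^ 2) ^ k = q ^ k * q ^ k.
Proof. rewrite <- Cpow_mult_r. replace (2 * k)%nat with (k + k)%nat by lia. apply Cpow_add_r. Qed.

Section TP.
Variable q : C.
Hypothesis Hq : q <> 0.
Hypothesis HQ : forall k, qpoch (q ^ 2) (q ^ 2) k <> 0.

Definition Vt (n i : nat) : C := (-1) ^ i * q ^ (i * i) / q ^ (2 * (i * n)).
Definition V (n : nat) : C := ssum (fun i => Vt n i * qb (q ^ 2) (2 * n) i) (S (2 * n)).

Lemma pw_add a b : q ^ (a + b) = q ^ a * q ^ b.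
Proof. apply Cpow_add_r. Qed.

Lemma Vt_bracket n i : (i <= 2 * n)%nat ->
  Vt (S n) i * (q ^ 2) ^ i + Vt (S n) (S i) * (q ^ 2) ^ (S i) * (q ^ 2) ^ (2 * n - i)
  + Vt (S n) (S i) + Vt (S n) (S (S i)) * (q ^ 2) ^ (2 * n - i)
  = (2 - q ^ (S (2 * n)) - / q ^ (S (2 * n))) * Vt n i.
Proof.
  intros Hi. destruct (Nat.le_exists_sub i (2 * n) Hi) as [d [Ed _]].
  replace (2 * n - i)%nat with d by lia.
  unfold Vt. rewrite !cpow2.
  assert (Ed' : q ^ d * q ^ i = q ^ n * q ^ n).
  { rewrite <- !pw_add. f_equal. lia. }
  replace (S i * S i)%nat with (i * i + i + i + 1)%nat by ring.
  replace (S (S i) * S (S i))%nat with (i * i + i + i + i + i + 4)%nat by ring.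
  replace (2 * (i * S n))%nat with (i * n + i * n + i + i)%nat by ring.
  replace (2 * (S i * S n))%nat with (i * n + i * n + i + i + n + n + 2)%nat by ring.
  replace (2 * (S (S i) * S n))%nat with (i * n + i * n + i + i + n + n + n + n + 4)%nat by ring.
  replace (2 * (i * n))%nat with (i * n + i * n)%nat by ring.
  replace (S (2 * n)) with (n + n + 1)%nat by lia.
  rewrite !pw_add. simpl.
  assert (Hqi : q ^ i <> 0) by (apply Cpow_nz; auto).
  assert (Hqn : q ^ n <> 0) by (apply Cpow_nz; auto).
  assert (Hqin : q ^ (i * n) <> 0) by (apply Cpow_nz; auto).
  assert (Hqd : q ^ d = q ^ n * q ^ n / q ^ i) by (rewrite <- Ed'; field; auto).
  rewrite Hqd. field. repeat split; auto.
Qed.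

End TP.

Section TP2.
Variable q : C.
Hypothesis Hq : q <> 0.
Hypothesis HQ : forall k, qpoch (q ^ 2) (q ^ 2) k <> 0.

Lemma V_rec n : V q (S n) = (2 - q ^ (S (2 * n)) - / q ^ (S (2 * n))) * V q n.
Proof.
  unfold V. replace (2 * S n)%nat with (S (S (2 * n))) by lia.
  assert (E1 := PS1 (q ^ 2) HQ (Vt q (S n)) (S (2 * n))). rewrite E1. clear E1.
  assert (E2 := PS2 (q ^ 2) HQ (fun i => Vt q (S n) i * (q ^ 2) ^ i) (2 * n)). cbv beta in E2.
  rewrite E2. clear E2.
  assert (E3 := PS2 (q ^ 2) HQ (fun i => Vt q (S n) (S i)) (2 * n)). cbv beta in E3.
  rewrite E3. clear E3.
  rewrite <- !ssum_plus. rewrite <- ssum_scal. apply ssum_ext. intros i Hi.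
  assert (B := Vt_bracket q Hq n i ltac:(lia)). rewrite Cmult_assoc. rewrite <- B. ring.
Qed.

Theorem TP n : V q n * (-1) ^ n * q ^ (n * n) = qpoch q (q ^ 2) n * qpoch q (q ^ 2) n.
Proof.
  induction n.
  - unfold V, Vt. simpl. rewrite qb_0 by auto. field. 
  - rewrite V_rec. change (qpoch q (q ^ 2) (S n)) with (qpoch q (q ^ 2) n * (1 - q * (q ^ 2) ^ n)).
    transitivity ((V q n * (-1)^n * q^(n*n)) * (1 - q * (q^2)^n) * (1 - q*(q^2)^n)); [| rewrite IHn; ring].
    replace (S n * S n)%nat with (n * n + n + n + 1)%nat by ring.
    replace (S (2 * n)) with (n + n + 1)%nat by lia.
    rewrite !Cpow_add_r. rewrite cpow2. rewrite (Cpow_S (-1) n). change (q ^ 1) with (q * 1).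
    assert (Hqn : q ^ n <> 0) by (apply Cpow_nz; auto).
    field. auto.
Qed.

End TP2.

End A4.
Import A4.

Module A5.
Local Open Scope C_scope.

Lemma ad_le a b : (a <= b)%nat -> Z.abs_nat (Z.of_nat a - Z.of_nat b) = (b - a)%nat.
Proof. intros. apply Nat2Z.inj. rewrite Nat2Z.inj_abs_nat. lia. Qed.
Lemma ad_ge a b : (b <= a)%nat -> Z.abs_nat (Z.of_nat a - Z.of_nat b) = (a - b)%nat.
Proof. intros. apply Nat2Z.inj. rewrite Nat2Z.inj_abs_nat. lia. Qed.

Lemma fold_sum (G : nat -> C) n :
  ssum (fun i => G (Z.abs_nat (Z.of_nat i - Z.of_nat n))) (S (2 * n)) =
  G O + 2 * ssum (fun s => G (S s)) n.
Proof.
  induction n.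
  - simpl. ring.
  - replace (S (2 * S n)) with (S (S (S (2 * n)))) by lia.
    rewrite ssum_shift.
    change (ssum (fun k => G (Z.abs_nat (Z.of_nat (S k) - Z.of_nat (S n)))) (S (S (2 * n))))
      with (ssum (fun k => G (Z.abs_nat (Z.of_nat (S k) - Z.of_nat (S n)))) (S (2 * n))
            + G (Z.abs_nat (Z.of_nat (S (S (2 * n))) - Z.of_nat (S n)))).
    rewrite (ssum_ext (fun k => G (Z.abs_nat (Z.of_nat (S k) - Z.of_nat (S n))))
                      (fun i => G (Z.abs_nat (Z.of_nat i - Z.of_nat n)))).
    2:{ intros k _. f_equal. f_equal. lia. }
    rewrite IHn. rewrite ad_le by lia. rewrite ad_ge by lia.
    replace (S n - 0)%nat with (S n) by lia.
    replace (S (S (2 * n)) - S n)%nat with (S n) by lia.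
    simpl. ring.
Qed.

Section TP3.
Variable q : C.
Hypothesis Hq : q <> 0.
Hypothesis HQ : forall k, qpoch (q ^ 2) (q ^ 2) k <> 0.

Definition tau (s : nat) : C :=
  match s with O => 1 | S _ => 2 * (-1) ^ s * q ^ (s * s) end.

Lemma Vt_point n i : (i <= 2 * n)%nat ->
  Vt q n i * qb (q ^ 2) (2 * n) i * (-1) ^ n * q ^ (n * n) =
  (fun s => (-1) ^ s * q ^ (s * s) * qb (q ^ 2) (2 * n) (n - s))
    (Z.abs_nat (Z.of_nat i - Z.of_nat n)).
Proof.
  intros Hi. cbv beta. unfold Vt.
  destruct (Nat.le_gt_cases i n) as [H|H].
  - rewrite ad_le by lia. destruct (Nat.le_exists_sub i n H) as [e [Ee _]].
    subst n. replace (e + i - i)%nat with e by lia.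
    replace (e + i - e)%nat with i by lia.
    replace ((e + i) * (e + i))%nat with (e * e + i * i + i * e + i * e)%nat by ring.
    replace (2 * (i * (e + i)))%nat with (i * i + i * i + i * e + i * e)%nat by ring.
    rewrite !Cpow_add_r.
    assert (H1 : q ^ (i * i) <> 0) by (apply Cpow_nz; auto).
    assert (H2 : q ^ (i * e) <> 0) by (apply Cpow_nz; auto).
    assert (M := m1sq i).
    match goal with |- _ = ?R => transitivity (((-1)^i * (-1)^i) * R) end;
      [field; auto | rewrite M; ring].
  - rewrite ad_ge by lia. destruct (Nat.le_exists_sub n i ltac:(lia)) as [e [Ee _]].
    subst i. replace (e + n - n)%nat with e by lia.
    rewrite qb_sym by (auto; lia).
    replace (2 * n - (e + n))%nat with (n - e)%nat by lia.
    replace ((e + n) * (e + n))%nat with (e * e + n * n + n * e + n * e)%nat by ring.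
    replace (2 * ((e + n) * n))%nat with (n * n + n * n + n * e + n * e)%nat by ring.
    rewrite !Cpow_add_r.
    assert (H1 : q ^ (n * n) <> 0) by (apply Cpow_nz; auto).
    assert (H2 : q ^ (n * e) <> 0) by (apply Cpow_nz; auto).
    assert (M := m1sq n).
    match goal with |- _ = ?R => transitivity (((-1)^n * (-1)^n) * R) end;
      [field; auto | rewrite M; ring].
Qed.

Theorem FTP n : ssum (fun s => tau s * qb (q ^ 2) (2 * n) (n - s)) (S n) =
  qpoch q (q ^ 2) n * qpoch q (q ^ 2) n.
Proof.
  rewrite <- TP by auto. unfold V.
  transitivity (ssum (fun i => Vt q n i * qb (q^2) (2 * n) i * (-1)^n * q^(n*n)) (S (2 * n))).
  2:{ rewrite (ssum_ext _ (fun i => ((-1)^n * q^(n*n)) * (Vt q n i * qb (q^2) (2 * n) i)))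
        by (intros; ring). rewrite ssum_scal. ring. }
  rewrite (ssum_ext (fun i => Vt q n i * qb (q^2) (2 * n) i * (-1)^n * q^(n*n))
    (fun i => (fun s => (-1) ^ s * q ^ (s * s) * qb (q ^ 2) (2 * n) (n - s))
    (Z.abs_nat (Z.of_nat i - Z.of_nat n)))).
  2:{ intros i Hi. apply Vt_point. lia. }
  rewrite (fold_sum (fun s => (-1)^s * q^(s*s) * qb (q^2) (2*n) (n - s)) n). rewrite ssum_shift. simpl tau. rewrite <- ssum_scal.
  f_equal. simpl. ring. apply ssum_ext. intros. simpl. ring.
Qed.

Theorem T_fold n : ssum (fun i => (-1) ^ (Z.abs_nat (Z.of_nat i - Z.of_nat n)) *
   q ^ (Z.abs_nat (Z.of_nat i - Z.of_nat n) * Z.abs_nat (Z.of_nat i - Z.of_nat n))) (S (2 * n))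
  = ssum tau (S n).
Proof.
  rewrite (fold_sum (fun s => (-1) ^ s * q ^ (s * s))).
  rewrite ssum_shift, <- ssum_scal. simpl. f_equal. ring. apply ssum_ext. intros. simpl. ring.
Qed.

End TP3.

End A5.
Import A5.

Module A6.
Local Open Scope C_scope.

Section Tel.
Variable Q : C.
Hypothesis HQ0 : Q <> 0.
Hypothesis HQ : forall k, qpoch Q Q k <> 0.

Definition cc (k r : nat) : C := qb Q (S (2 * k)) (k - r) * (1 - Q ^ (S (2 * r))) / Q ^ r.
Definition XX (k : nat) : C := (1 - Q ^ (S (2 * k))) / Q ^ k.

Lemma TelStep s d : cc (s + S d) s + XX (s + S d) * qb Q (2 * (s + S d)) d =
   XX (s + S d) * qb Q (2 * (s + S d)) (S d).
Proof.
  unfold cc, XX, qb.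
  replace (s + S d - s)%nat with (S d) by lia.
  replace (S (2 * (s + S d)) - S d)%nat with (S (2*s + d + 1)) by lia.
  replace (2 * (s + S d) - d)%nat with (S (2*s+d+1)) by lia.
  replace (2 * (s + S d) - S d)%nat with (2*s+d+1)%nat by lia.
  assert (Em : Q ^ (2 * (s + S d)) = Q^s*Q^s*Q^d*Q^d*Q*Q).
  { replace (2 * (s + S d))%nat with (s + s + d + d + 1 + 1)%nat by lia.
    rewrite !Cpow_add_r. simpl. ring. }
  assert (Eu : Q ^ (2*s+d+1) = Q^s*Q^s*Q^d*Q).
  { replace (2*s+d+1)%nat with (s + s + d + 1)%nat by lia.
    rewrite !Cpow_add_r. simpl. ring. }
  assert (Ek : Q ^ (s + S d) = Q^s*Q^d*Q).
  { replace (s + S d)%nat with (s + d + 1)%nat by lia.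
    rewrite !Cpow_add_r. simpl. ring. }
  assert (E2s : Q ^ (2 * s) = Q^s*Q^s).
  { replace (2 * s)%nat with (s + s)%nat by lia.
    rewrite !Cpow_add_r. ring. }
  set (u := (2*s+d+1)%nat) in *.
  set (m := (2 * (s + S d))%nat) in *.
  change (qpoch Q Q (S m)) with (qpoch Q Q m * (1 - Q * Q^m)).
  change (qpoch Q Q (S u)) with (qpoch Q Q u * (1 - Q * Q^u)).
  change (qpoch Q Q (S d)) with (qpoch Q Q d * (1 - Q*Q^d)).
  rewrite !Cpow_S. rewrite Em, Eu, Ek, E2s.
  destruct (HQS Q HQ d) as [H1 H2]. destruct (HQS Q HQ u) as [H3 H4].
  rewrite Eu in H4.
  assert (Hs : Q ^ s <> 0) by (apply Cpow_nz; auto).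
  assert (Hd : Q ^ d <> 0) by (apply Cpow_nz; auto).
  assert (Hm := HQ m).
  field. repeat split; auto.
Qed.

Lemma Tel d : forall s k, (s + d = k)%nat ->
  ssum (fun m => cc k (s + m)) (S d) = XX k * qb Q (2 * k) d.
Proof.
  induction d; intros s k Hk.
  - simpl. rewrite Nat.add_0_r. subst k. rewrite Nat.add_0_r. unfold cc, XX.
    rewrite Nat.sub_diag, !qb_0 by auto. field. apply Cpow_nz; auto.
  - rewrite ssum_shift.
    rewrite (ssum_ext (fun k0 => cc k (s + S k0)) (fun m => cc k (S s + m))) by (intros; f_equal; lia).
    rewrite (IHd (S s) k) by lia. rewrite Nat.add_0_r. subst k.
    apply TelStep.
Qed.

End Tel.

Section BP.
Variable q : C.
Hypothesis Hq : q <> 0.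
Hypothesis HQ : forall k, qpoch (q ^ 2) (q ^ 2) k <> 0.

Theorem BP k : ssum (fun r => cc (q ^ 2) k r * ssum (tau q) (S r)) (S k) =
  XX (q ^ 2) k * (qpoch q (q ^ 2) k * qpoch q (q ^ 2) k).
Proof.
  rewrite (ssum_ext _ (fun r => ssum (fun s => cc (q^2) k r * tau q s) (S r)))
    by (intros; rewrite ssum_scal; reflexivity).
  rewrite (ssum_swap_tri (fun r s => cc (q^2) k r * tau q s)).
  rewrite (ssum_ext _ (fun s => XX (q ^ 2) k * (tau q s * qb (q ^ 2) (2 * k) (k - s)))).
  2:{ intros s Hs. rewrite (ssum_ext _ (fun m => tau q s * cc (q ^ 2) k (s + m)))
        by (intros; ring).
      rewrite ssum_scal. rewrite (Tel (q^2)) by (auto; try (apply Cpow_nz; auto); lia). ring. }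
  rewrite ssum_scal. rewrite FTP by auto. reflexivity.
Qed.

End BP.

End A6.
Import A6.

Module A7.
Local Open Scope C_scope.

Lemma qpoch_S x p n : qpoch x p (S n) = qpoch x p n * (1 - x * p ^ n).
Proof. reflexivity. Qed.

Lemma PQ1 q m : qpoch q q m * qpoch (- q) q m = qpoch (q ^ 2) (q ^ 2) m.
Proof.
  induction m. simpl. ring. rewrite !qpoch_S. rewrite <- IHm. rewrite cpow2. ring.
Qed.

Lemma PQ2 q k : qpoch q q (2 * k) = qpoch q (q ^ 2) k * qpoch (q ^ 2) (q ^ 2) k.
Proof.
  induction k. simpl. ring.
  replace (2 * S k)%nat with (S (S (2 * k))) by lia.
  change (qpoch q q (S (S (2 * k)))) with
    (qpoch q q (2 * k) * (1 - q * q ^ (2 * k)) * (1 - q * q ^ (S (2 * k)))).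
  rewrite IHk. rewrite !qpoch_S, (Cpow_S q (2 * k)). rewrite cpow2. replace (2 * k)%nat with (k + k)%nat by lia.
  rewrite Cpow_add_r. ring.
Qed.

Section FI.
Variables q a c : C.
Hypothesis Hq : q <> 0.
Hypothesis Ha : a <> 0.
Hypothesis Hc : c <> 0.
Hypothesis HQ : forall k, qpoch (q ^ 2) (q ^ 2) k <> 0.
Hypothesis HQa : forall k, qpoch (q ^ 2 * a) (q ^ 2) k <> 0.
Hypothesis HQc : forall k, qpoch (q ^ 2 * c) (q ^ 2) k <> 0.
Hypothesis Hq1 : forall k, qpoch q (q ^ 2) k <> 0.
Hypothesis Hmq : forall k, qpoch (- q) q k <> 0.

Local Notation Q := (q ^ 2).
Let PP k := qpoch (q ^ 2 / a) (q ^ 2) k * qpoch (q ^ 2 / c) (q ^ 2) k.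
Let FF N k := PP k * (a * c) ^ k * qpoch (a * c) Q (N - k) / qpoch Q Q (N - k).

Lemma HQn : Q <> 0.
Proof. apply Cpow_nz; auto. Qed.

Lemma L_inner N r : (r <= N)%nat ->
  ssum (fun m => FF N (r + m) / (qpoch Q Q m * qpoch Q Q (S (2 * r + m)))) (S (N - r)) =
  PP r * (a * c) ^ r * qpoch (Q * a) Q N * qpoch (Q * c) Q N /
    (qpoch (Q * a) Q r * qpoch (Q * c) Q r * qpoch Q Q (N - r) * qpoch Q Q (S (N + r))).
Proof.
  intros Hr.
  destruct (Nat.le_exists_sub r N Hr) as [M [EM _]]. subst N.
  replace (M + r - r)%nat with M by lia.
  assert (E := saal Q (q ^ 2 / a * Q ^ r) (q ^ 2 / c * Q ^ r) HQ M (a * c)).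
  set (K := PP r * (a * c) ^ r / (qpoch Q Q M * qpoch Q Q (S (2 * r + M)))).
  rewrite (ssum_ext _ (fun m => K * st Q (q ^ 2 / a * Q ^ r) (q ^ 2 / c * Q ^ r) (a * c) M m)).
  2:{ intros m Hm. destruct (Nat.le_exists_sub m M ltac:(lia)) as [e [Ee _]]. subst M.
      unfold FF, K, st, PP, qb.
      replace (e + m + r - (r + m))%nat with e by lia.
      replace (e + m - m)%nat with e by lia.
      replace (S (2 * r + (e + m))) with (S (2 * r + m) + e)%nat by lia.
      rewrite (qpoch_add Q Q (S (2 * r + m)) e).
      replace (a * c * (q ^ 2 / a * Q ^ r) * (q ^ 2 / c * Q ^ r) * Q ^ m)
        with (Q * Q ^ S (2 * r + m)).
      2:{ replace (S (2 * r + m)) with (r + r + m + 1)%nat by lia.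
          rewrite !Cpow_add_r. field. auto. }
      rewrite !qpoch_add. rewrite Cpow_add_r.
      assert (H1 := HQ e). assert (H2 := HQ m). assert (H3 := HQ (S (2 * r + m))).
      assert (H4 := HQ (S (2 * r + m) + e)%nat). rewrite qpoch_add in H4.
      apply Cmult_neq_0_inv in H4. destruct H4 as [_ H4].
      assert (H5 := HQ (e + m)%nat).
      rewrite qpoch_add in H5. apply Cmult_neq_0_inv in H5. destruct H5 as [H5 H6].
      field. repeat split; auto. }
  rewrite ssum_scal. rewrite E.
  unfold K. replace (M + r)%nat with (r + M)%nat by lia.
  rewrite !(qpoch_add (Q * a) Q r M), !(qpoch_add (Q * c) Q r M).
  replace (a * c * (q ^ 2 / a * Q ^ r)) with (Q * c * Q ^ r) by (field; auto).
  replace (a * c * (q ^ 2 / c * Q ^ r)) with (Q * a * Q ^ r) by (field; auto).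
  replace (S (r + M + r)) with (S (2 * r + M)) by lia.
  assert (H1 := HQ M). assert (H2 := HQ (S (2 * r + M))).
  assert (H3 := HQa r). assert (H4 := HQc r). fold Q in *.
  field. repeat split; auto.
Qed.


Definition ww (r : nat) : C := (1 - Q ^ (S (2 * r))) / Q ^ r * ssum (tau q) (S r).
Definition bet (k : nat) : C := qpoch q Q k / (qpoch (- q) q (2 * k) * qpoch Q Q k) / Q ^ k.

Lemma BPb k : bet k = ssum (fun r => ww r / (qpoch Q Q (k - r) * qpoch Q Q (S (k + r)))) (S k).
Proof.
  assert (E := BP q Hq HQ k).
  assert (H0 := HQ (S (2 * k))).
  rewrite (ssum_ext _ (fun r => / qpoch Q Q (S (2 * k)) * (cc Q k r * ssum (tau q) (S r)))).
  2:{ intros r Hr. unfold ww, cc, qb.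
      replace (S (2 * k) - (k - r))%nat with (S (k + r)) by lia.
      assert (H1 := HQ (k - r)%nat). assert (H2 := HQ (S (k + r))).
      assert (H3 : Q ^ r <> 0) by (apply Cpow_nz; apply HQn).
      field. repeat split; auto. }
  rewrite ssum_scal, E. unfold bet, XX.
  change (qpoch Q Q (S (2 * k))) with (qpoch Q Q (2 * k) * (1 - Q * Q ^ (2 * k))) in *.
  apply Cmult_neq_0_inv in H0. destruct H0 as [H0 H5].
  replace (qpoch Q Q (2 * k)) with (qpoch q (q^2) k * qpoch (q^2) (q^2) k * qpoch (-q) q (2*k))
    by (rewrite <- (PQ1 q (2 * k)), (PQ2 q k); ring).
  rewrite (Cpow_S Q (2 * k)).
  assert (H1 := Hq1 k). assert (H2 := HQ k). assert (H3 := Hmq (2 * k)%nat).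
  assert (H4 : Q ^ k <> 0) by (apply Cpow_nz; apply HQn).
  field. repeat split; auto.
Qed.

Lemma Cpow_div (x y : C) k : y <> 0 -> (x / y) ^ k = x ^ k / y ^ k.
Proof. intros H. unfold Cdiv. rewrite Cpow_mult_l, Cpow_inv; auto. Qed.

Lemma lhs_term_eq r : lhs_term q a c r =
  ww r * (PP r * (a * c) ^ r / (qpoch (Q * a) Q r * qpoch (Q * c) Q r)).
Proof.
  unfold lhs_term. rewrite sum_n_ssum.
  assert (H1 := HQa r). assert (H2 := HQc r).
  assert (H3 : q ^ (2 * r) <> 0) by (apply Cpow_nz; auto).
  rewrite (ssum_ext _ (fun i => ((1 - q ^ (4 * r + 2)) / q ^ (2 * r) *
      (PP r * (a * c) ^ r / (qpoch (Q * a) Q r * qpoch (Q * c) Q r))) *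
     ((-1) ^ (Z.abs_nat (Z.of_nat i - Z.of_nat r)) *
      q ^ (Z.abs_nat (Z.of_nat i - Z.of_nat r) * Z.abs_nat (Z.of_nat i - Z.of_nat r))))).
  2:{ intros i Hi. unfold lhs_inner, PP. cbv zeta. field. repeat split; auto. }
  rewrite ssum_scal. rewrite T_fold. unfold ww.
  rewrite <- !Cpow_mult_r. replace (2 * S (2 * r))%nat with (4 * r + 2)%nat by lia.
  ring.
Qed.

Lemma rhs_term_eq k : rhs_term q a c k = PP k * (a * c) ^ k * bet k.
Proof.
  unfold rhs_term, PP, bet. rewrite Cpow_div by apply HQn.
  assert (H1 := Hmq (2 * k)%nat). assert (H2 := HQ k).
  assert (H3 : Q ^ k <> 0) by (apply Cpow_nz; apply HQn).
  field. repeat split; auto.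
Qed.

Theorem FI N :
  ssum (fun r => lhs_term q a c r * (qpoch Q Q N * qpoch Q Q (S N) /
                   (qpoch Q Q (N - r) * qpoch Q Q (S (N + r))))) (S N) =
  qpoch Q Q (S N) / (qpoch (Q * a) Q N * qpoch (Q * c) Q N) *
  ssum (fun k => rhs_term q a c k * (qpoch (a * c) Q (N - k) * qpoch Q Q N / qpoch Q Q (N - k))) (S N).
Proof.
  rewrite (ssum_ext (fun k => rhs_term q a c k * (qpoch (a * c) Q (N - k) * qpoch Q Q N / qpoch Q Q (N - k)))
    (fun k => qpoch Q Q N * ssum (fun r => FF N k * ww r / (qpoch Q Q (k - r) * qpoch Q Q (S (k + r)))) (S k))).
  2:{ intros k Hk. rewrite rhs_term_eq, BPb.
      rewrite (ssum_ext (fun r => FF N k * ww r / (qpoch Q Q (k - r) * qpoch Q Q (S (k + r))))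
         (fun r => FF N k * (ww r / (qpoch Q Q (k - r) * qpoch Q Q (S (k + r)))))) by (intros; unfold Cdiv; ring).
      rewrite ssum_scal. unfold FF. assert (H := HQ (N - k)%nat). field. auto. }
  rewrite ssum_scal.
  rewrite (ssum_swap_tri (fun k r => FF N k * ww r / (qpoch Q Q (k - r) * qpoch Q Q (S (k + r))))).
  rewrite (ssum_ext (fun r => ssum (fun m => FF N (r + m) * ww r /
       (qpoch Q Q (r + m - r) * qpoch Q Q (S (r + m + r)))) (S (N - r)))
     (fun r => ww r * ssum (fun m => FF N (r + m) / (qpoch Q Q m * qpoch Q Q (S (2 * r + m)))) (S (N - r)))).
  2:{ intros r Hr. rewrite <- ssum_scal. apply ssum_ext. intros m Hm.
      replace (r + m - r)%nat with m by lia. replace (S (r + m + r)) with (S (2 * r + m)) by lia.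
      unfold Cdiv; ring. }
  rewrite <- ssum_scal. rewrite <- ssum_scal. apply ssum_ext. intros r Hr.
  rewrite L_inner by lia. rewrite lhs_term_eq.
  assert (H1 := HQa N). assert (H2 := HQc N). assert (H3 := HQa r). assert (H4 := HQc r).
  assert (H5 := HQ (N - r)%nat). assert (H6 := HQ (S (N + r))).
  field. repeat split; auto.
Qed.

End FI.

End A7.
Import A7.

Module B1.
Local Open Scope C_scope.

Definition cvC (u : nat -> C) (L : C) := is_lim_seq (fun n => Cmod (u n - L)) 0.

Lemma Cmod_ge0 z : (0 <= Cmod z)%R.
Proof. apply Cmod_ge_0. Qed.

Lemma Cmod_sub_sym x y : Cmod (x - y) = Cmod (y - x).
Proof. replace (x - y) with (- (y - x)) by ring. apply Cmod_opp. Qed.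

Lemma Cmod_tri_sub x y : (Cmod x <= Cmod y + Cmod (x - y))%R.
Proof. replace x with (y + (x - y)) at 1 by ring. apply Cmod_triangle. Qed.

Lemma cvC_bound_loc u L (r : nat -> R) :
  eventually (fun n => Cmod (u n - L) <= r n)%R -> is_lim_seq r 0 -> cvC u L.
Proof.
  intros H Hr. unfold cvC. apply is_lim_seq_le_le_loc with (fun _ => 0%R) r; auto.
  - destruct H as [N HN]. exists N. intros n Hn. split; [apply Cmod_ge0 | auto].
  - apply is_lim_seq_const.
Qed.

Lemma cvC_bound u L (r : nat -> R) :
  (forall n, Cmod (u n - L) <= r n)%R -> is_lim_seq r 0 -> cvC u L.
Proof. intros H Hr. apply cvC_bound_loc with r; auto. exists O. auto. Qed.

Lemma cvC_const L : cvC (fun _ => L) L.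
Proof. apply cvC_bound with (fun _ => 0%R). intros. replace (L - L) with (RtoC 0) by ring.
  rewrite Cmod_0. lra. apply is_lim_seq_const. Qed.

Lemma cvC_ext_loc u v L : eventually (fun n => u n = v n) -> cvC u L -> cvC v L.
Proof.
  intros [N HN] H. unfold cvC in *. apply is_lim_seq_ext_loc with (fun n => Cmod (u n - L)); auto.
  exists N. intros n Hn. rewrite HN; auto.
Qed.

Lemma cvC_ext u v L : (forall n, u n = v n) -> cvC u L -> cvC v L.
Proof. intros H. apply cvC_ext_loc. exists O; auto. Qed.

Lemma cvC_mod u L : cvC u L -> is_lim_seq (fun n => Cmod (u n)) (Cmod L).
Proof.
  intros H. apply is_lim_seq_le_le with (fun n => Cmod L - Cmod (u n - L))%R
      (fun n => Cmod L + Cmod (u n - L))%R.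
  - intros n. split.
    + assert (T := Cmod_tri_sub L (u n)). rewrite Cmod_sub_sym in T. lra.
    + assert (T := Cmod_tri_sub (u n) L). lra.
  - replace (Finite (Cmod L)) with (Finite (Cmod L - 0)%R) by (f_equal; ring).
    apply is_lim_seq_minus'. apply is_lim_seq_const. apply H.
  - replace (Finite (Cmod L)) with (Finite (Cmod L + 0)%R) by (f_equal; ring).
    apply is_lim_seq_plus'. apply is_lim_seq_const. apply H.
Qed.

Lemma cvC_le u L B : cvC u L -> eventually (fun n => Cmod (u n) <= B)%R -> (Cmod L <= B)%R.
Proof.
  intros H HB. apply cvC_mod in H.
  assert (T := is_lim_seq_le_loc _ _ _ _ HB H (is_lim_seq_const B)). simpl in T. auto.
Qed.

Lemma cvC_ge u L B : cvC u L -> eventually (fun n => B <= Cmod (u n))%R -> (B <= Cmod L)%R.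
Proof.
  intros H HB. apply cvC_mod in H.
  assert (T := is_lim_seq_le_loc _ _ _ _ HB (is_lim_seq_const B) H). simpl in T. auto.
Qed.

Lemma cvC_plus u v L M : cvC u L -> cvC v M -> cvC (fun n => u n + v n) (L + M).
Proof.
  intros Hu Hv. apply cvC_bound with (fun n => Cmod (u n - L) + Cmod (v n - M))%R.
  - intros n. replace (u n + v n - (L + M)) with ((u n - L) + (v n - M)) by ring.
    apply Cmod_triangle.
  - replace (Finite 0) with (Finite (0 + 0)%R) by (f_equal; ring).
    apply is_lim_seq_plus'; auto.
Qed.

Lemma cvC_mult u v L M : cvC u L -> cvC v M -> cvC (fun n => u n * v n) (L * M).
Proof.
  intros Hu Hv.
  apply cvC_bound with (fun n => (Cmod L + Cmod (u n - L)) * Cmod (v n - M) + Cmod (u n - L) * Cmod M)%R.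
  - intros n. replace (u n * v n - L * M) with (u n * (v n - M) + (u n - L) * M) by ring.
    eapply Rle_trans. apply Cmod_triangle. rewrite !Cmod_mult.
    apply Rplus_le_compat_r. apply Rmult_le_compat_r. apply Cmod_ge0.
    assert (T := Cmod_tri_sub (u n) L). lra.
  - replace (Finite 0) with (Finite ((Cmod L + 0) * 0 + 0 * Cmod M)%R) by (f_equal; ring).
    apply is_lim_seq_plus'. apply is_lim_seq_mult'. apply is_lim_seq_plus'.
    apply is_lim_seq_const. apply Hu. apply Hv.
    apply is_lim_seq_mult'. apply Hu. apply is_lim_seq_const.
Qed.

Lemma aux_inv_bound e x l : (0 <= e)%R -> (0 < l)%R -> (l / 2 <= x)%R ->
  (e / (x * l) <= 2 / (l * l) * e)%R.
Proof.
  intros He Hl Hx. apply Rle_trans with (e / (l / 2 * l))%R.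
  - unfold Rdiv. apply Rmult_le_compat_l; [lra|]. apply Rinv_le_contravar; nra.
  - right. field. lra.
Qed.

Lemma cvC_inv u L : cvC u L -> L <> 0 -> cvC (fun n => / u n) (/ L).
Proof.
  intros Hu HL.
  assert (HL' : (0 < Cmod L)%R) by (apply Cmod_gt_0; auto).
  assert (Ev : eventually (fun n => Cmod L / 2 <= Cmod (u n))%R).
  { apply cvC_mod in Hu. apply is_lim_seq_spec in Hu.
    destruct (Hu (mkposreal (Cmod L / 2) ltac:(lra))) as [N HN]. exists N. intros n Hn.
    specialize (HN n Hn). simpl in HN. apply Rabs_lt_between in HN. lra. }
  apply cvC_bound_loc with (fun n => 2 / (Cmod L * Cmod L) * Cmod (u n - L))%R.
  - destruct Ev as [N HN]. exists N. intros n Hn. specialize (HN n Hn).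
    assert (Hun : u n <> 0) by (intro E; rewrite E, Cmod_0 in HN; lra).
    replace (/ u n - / L) with ((L - u n) / (u n * L)) by (field; auto).
    rewrite Cmod_div by (apply Cmult_neq_0; auto). rewrite Cmod_mult, Cmod_sub_sym.
    apply aux_inv_bound; auto. apply Cmod_ge0.
  - replace (Finite 0) with (Finite (2 / (Cmod L * Cmod L) * 0)%R) by (f_equal; ring).
    apply is_lim_seq_mult'. apply is_lim_seq_const. apply Hu.
Qed.

Lemma cvC_shift u L k : cvC u L -> cvC (fun n => u (n + k)%nat) L.
Proof. intros H. unfold cvC in *. apply (is_lim_seq_incr_n (fun n => Cmod (u n - L)) k) in H. auto. Qed.

Lemma cvC_unshift u L k : cvC (fun n => u (n - k)%nat) L <-> cvC u L.
Proof.
  unfold cvC. rewrite (is_lim_seq_incr_n (fun n => Cmod (u (n - k)%nat - L)) k).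
  split; apply is_lim_seq_ext; intros n; replace (n + k - k)%nat with n by lia; auto.
Qed.

Lemma cvC_filterlim u L : cvC u L -> filterlim u eventually (locally L).
Proof.
  intros H. apply (proj2 (@filterlim_locally_ball_norm C_AbsRing nat C_NormedModule eventually _ u L)).
  intros eps.
  unfold cvC in H. apply is_lim_seq_spec in H. destruct (H eps) as [N HN].
  exists N. intros n Hn. specialize (HN n Hn). unfold ball_norm.
  change (Cmod (u n - L) < eps)%R. simpl in HN. rewrite Rminus_0_r, Rabs_pos_eq in HN by apply Cmod_ge0.
  exact HN.
Qed.

Lemma filterlim_cvC u L : filterlim u eventually (locally L) -> cvC u L.
Proof.
  intros H. unfold cvC. apply is_lim_seq_spec. intros eps.
  assert (H' := proj1 (@filterlim_locally_ball_norm C_AbsRing nat C_NormedModule eventually _ u L) H).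
  destruct (H' eps) as [N HN].
  exists N. intros n Hn. specialize (HN n Hn). unfold ball_norm in HN.
  change (Cmod (u n - L) < eps)%R in HN. rewrite Rminus_0_r, Rabs_pos_eq by apply Cmod_ge0.
  exact HN.
Qed.

Lemma cvC_fst u L : cvC u L -> is_lim_seq (fun n => fst (u n)) (fst L).
Proof.
  intros H. apply is_lim_seq_le_le with (fun n => fst L - Cmod (u n - L))%R
      (fun n => fst L + Cmod (u n - L))%R.
  - intros n. assert (T := Rmax_Cmod (u n - L)).
    assert (T2 : (Rabs (fst (u n - L)%C) <= Cmod (u n - L))%R) by
      (eapply Rle_trans; [apply Rmax_l | apply T]).
    simpl in T2. apply Rabs_le_between in T2. lra.
  - replace (Finite (fst L)) with (Finite (fst L - 0)%R) by (f_equal; ring).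
    apply is_lim_seq_minus'. apply is_lim_seq_const. apply H.
  - replace (Finite (fst L)) with (Finite (fst L + 0)%R) by (f_equal; ring).
    apply is_lim_seq_plus'. apply is_lim_seq_const. apply H.
Qed.

Lemma cvC_snd u L : cvC u L -> is_lim_seq (fun n => snd (u n)) (snd L).
Proof.
  intros H. apply is_lim_seq_le_le with (fun n => snd L - Cmod (u n - L))%R
      (fun n => snd L + Cmod (u n - L))%R.
  - intros n. assert (T := Rmax_Cmod (u n - L)).
    assert (T2 : (Rabs (snd (u n - L)%C) <= Cmod (u n - L))%R) by
      (eapply Rle_trans; [apply Rmax_r | apply T]).
    simpl in T2. apply Rabs_le_between in T2. lra.
  - replace (Finite (snd L)) with (Finite (snd L - 0)%R) by (f_equal; ring).
    apply is_lim_seq_minus'. apply is_lim_seq_const. apply H.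
  - replace (Finite (snd L)) with (Finite (snd L + 0)%R) by (f_equal; ring).
    apply is_lim_seq_plus'. apply is_lim_seq_const. apply H.
Qed.

Lemma cvC_ssum (f : nat -> nat -> C) (g : nat -> C) K :
  (forall k, (k < K)%nat -> cvC (fun N => f N k) (g k)) ->
  cvC (fun N => ssum (f N) K) (ssum g K).
Proof.
  induction K; intros H.
  - simpl. apply cvC_const.
  - simpl. apply cvC_plus. apply IHK. intros; apply H; lia. apply H; lia.
Qed.

End B1.
Import B1.

Module B2.
Local Open Scope C_scope.
Local Open Scope R_scope.

Fixpoint rsum (f : nat -> R) (n : nat) : R :=
  match n with O => 0%R | S m => (rsum f m + f m)%R end.

Lemma rsum_le f g n : (forall k, (k < n)%nat -> f k <= g k)%R -> (rsum f n <= rsum g n)%R.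
Proof. induction n; intros H; simpl. lra. assert (H1 := H n ltac:(lia)).
  assert (rsum f n <= rsum g n)%R by (apply IHn; intros; apply H; lia). lra. Qed.

Lemma rsum_nonneg f n : (forall k, 0 <= f k)%R -> (0 <= rsum f n)%R.
Proof. induction n; intros H; simpl. lra. assert (H1 := H n). specialize (IHn H). lra. Qed.

Lemma Cmod_ssum f n : (Cmod (ssum f n) <= rsum (fun k => Cmod (f k)) n)%R.
Proof. induction n; simpl. rewrite Cmod_0. lra.
  eapply Rle_trans. apply Cmod_triangle. lra. Qed.

Lemma rsum_scal c f n : rsum (fun k => c * f k)%R n = (c * rsum f n)%R.
Proof. induction n; simpl. ring. rewrite IHn. ring. Qed.

Lemma rsum_geom t n : (0 <= t < 1)%R -> (rsum (fun i => t ^ i) n <= / (1 - t))%R.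
Proof.
  intros Ht. assert (E : rsum (fun i => t ^ i) n = ((1 - t ^ n) / (1 - t))%R).
  { induction n; simpl. field. lra. rewrite IHn. field. lra. }
  rewrite E. unfold Rdiv. rewrite <- (Rmult_1_l (/ (1 - t))) at 2.
  apply Rmult_le_compat_r. left; apply Rinv_0_lt_compat; lra.
  assert (0 <= t ^ n)%R by (apply pow_le; lra). lra.
Qed.

Lemma exp_mono x y : (x <= y)%R -> (exp x <= exp y)%R.
Proof. intros [H|H]. left. apply exp_increasing; auto. right; subst; auto. Qed.

Lemma pow_le1 t n : 0 <= t <= 1 -> t ^ n <= 1.
Proof. intros Ht. induction n; simpl. lra.
  assert (0 <= t ^ n) by (apply pow_le; lra). nra. Qed.

Lemma pow_decr t m n : (0 <= t <= 1)%R -> (m <= n)%nat -> (t ^ n <= t ^ m)%R.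
Proof.
  intros Ht Hmn. replace n with (m + (n - m))%nat by lia. rewrite pow_add.
  rewrite <- (Rmult_1_r (t ^ m)) at 2. apply Rmult_le_compat_l. apply pow_le; lra.
  apply pow_le1; lra.
Qed.

Lemma Cmod_1_minus (z : C) : Cmod (1 - z) <= 1 + Cmod z.
Proof. eapply Rle_trans. apply Cmod_triangle. rewrite Cmod_opp, Cmod_1. lra. Qed.

Lemma Cmod_1_minus_ge (z : C) : 1 - Cmod z <= Cmod (1 - z).
Proof. assert (T := Cmod_triangle z (1 - z)). replace (z + (1 - z))%C with (RtoC 1) in T by ring.
  rewrite Cmod_1 in T. lra. Qed.

Lemma qp_upper_aux x p n : Cmod (qpoch x p n) <= exp (Cmod x * rsum (fun i => Cmod p ^ i) n).
Proof.
  induction n; simpl. rewrite Cmod_1. rewrite Rmult_0_r, exp_0. lra.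
  rewrite Cmod_mult. rewrite Rmult_plus_distr_l, exp_plus.
  apply Rmult_le_compat; try apply Cmod_ge0. auto.
  eapply Rle_trans. apply Cmod_1_minus. rewrite Cmod_mult, Cmod_pow.
  apply exp_ineq1_le.
Qed.

Lemma qp_upper x p n : Cmod p < 1 -> Cmod (qpoch x p n) <= exp (Cmod x / (1 - Cmod p)).
Proof.
  intros Hp. eapply Rle_trans. apply qp_upper_aux. apply exp_mono.
  unfold Rdiv. apply Rmult_le_compat_l. apply Cmod_ge0. apply rsum_geom.
  split; auto. apply Cmod_ge0.
Qed.

Lemma one_minus_ge_exp y t : 0 <= y <= t -> t < 1 -> exp (- (y / (1 - t))) <= 1 - y.
Proof.
  intros Hy Ht. rewrite exp_Ropp.
  assert (E := exp_ineq1_le (y / (1 - t))).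
  assert (0 <= y / (1 - t)) by (apply Rdiv_le_0_compat; lra).
  apply Rle_trans with (/ (1 + y / (1 - t))).
  apply Rinv_le_contravar; lra.
  rewrite <- (Rinv_inv (1 - y)) by lra. 
  destruct (Req_dec y 1). lra.
  apply Rinv_le_contravar. apply Rinv_0_lt_compat. lra.
  apply Rmult_le_reg_r with (1 - y). lra. rewrite Rinv_l by lra.
  assert (y * (t - y) / (1 - t) >= 0).
  { apply Rle_ge. apply Rdiv_le_0_compat; nra. }
  replace ((1 + y / (1 - t)) * (1 - y)) with (1 + y * (t - y) / (1 - t)) by (field; lra). lra.
Qed.

Lemma qp_lower_aux x p n t : Cmod x <= t -> t < 1 -> Cmod p <= 1 ->
  exp (- (Cmod x * rsum (fun i => Cmod p ^ i) n / (1 - t))) <= Cmod (qpoch x p n).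
Proof.
  intros Hx Ht Hp. induction n; simpl.
  - rewrite Cmod_1. rewrite Rmult_0_r. unfold Rdiv. rewrite Rmult_0_l, Ropp_0, exp_0. lra.
  - rewrite Cmod_mult.
    replace (- (Cmod x * (rsum (fun i => Cmod p ^ i) n + Cmod p ^ n) / (1 - t)))
      with (- (Cmod x * rsum (fun i => Cmod p ^ i) n / (1 - t)) + - ((Cmod x * Cmod p ^ n) / (1 - t)))
      by (field; lra).
    rewrite exp_plus. apply Rmult_le_compat; try (left; apply exp_pos). auto.
    eapply Rle_trans. 2: apply Cmod_1_minus_ge. rewrite Cmod_mult, Cmod_pow.
    apply one_minus_ge_exp; auto.
    assert (0 <= Cmod p ^ n <= 1) by (split; [apply pow_le; apply Cmod_ge0 | apply pow_le1; split; auto; apply Cmod_ge0]).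
    assert (0 <= Cmod x) by apply Cmod_ge0.
    split. nra. nra.
Qed.

Lemma qp_lower x p n t : Cmod x <= t -> t < 1 -> Cmod p < 1 ->
  exp (- (Cmod x / (1 - Cmod p) / (1 - t))) <= Cmod (qpoch x p n).
Proof.
  intros Hx Ht Hp. eapply Rle_trans. 2: apply qp_lower_aux with (t := t); auto; lra.
  apply exp_mono. apply Ropp_le_contravar. unfold Rdiv. apply Rmult_le_compat_r.
  left. apply Rinv_0_lt_compat. lra.
  apply Rmult_le_compat_l. apply Cmod_ge0. apply rsum_geom. split; auto. apply Cmod_ge0.
Qed.

Fixpoint rprod (f : nat -> R) (n : nat) : R :=
  match n with O => 1 | S m => rprod f m * (1 + f m) end.

Lemma rprod_exp f n : (forall k, 0 <= f k) -> 0 <= rprod f n <= exp (rsum f n).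
Proof.
  intros Hf. induction n; simpl. rewrite exp_0. lra.
  rewrite exp_plus. assert (H1 := Hf n). assert (H2 := exp_ineq1_le (f n)).
  destruct IHn. split. nra. apply Rmult_le_compat; try lra.
Qed.

Lemma qp_close_aux x p n :
  Cmod (qpoch x p n - 1) <= rprod (fun i => Cmod x * Cmod p ^ i) n - 1.
Proof.
  induction n; simpl.
  - replace (1 - 1)%C with (RtoC 0) by ring. rewrite Cmod_0. lra.
  - replace (qpoch x p n * (1 - x * p ^ n) - 1)%C with
      ((qpoch x p n - 1) * (1 - x * p ^ n) + - (x * p ^ n))%C by ring.
    eapply Rle_trans. apply Cmod_triangle. rewrite Cmod_opp, !Cmod_mult, Cmod_pow.
    assert (T := Cmod_1_minus (x * p ^ n)). rewrite Cmod_mult, Cmod_pow in T.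
    assert (0 <= Cmod x * Cmod p ^ n) by (apply Rmult_le_pos; [apply Cmod_ge0|apply pow_le; apply Cmod_ge0]).
    assert (0 <= Cmod (qpoch x p n - 1)) by apply Cmod_ge0.
    assert (Cmod (qpoch x p n - 1) * Cmod (1 - x * p ^ n) <=
            (rprod (fun i : nat => Cmod x * Cmod p ^ i) n - 1) * (1 + Cmod x * Cmod p ^ n)).
    { apply Rmult_le_compat; auto. apply Cmod_ge0. }
    nra.
Qed.

Lemma exp_minus1_le A : 0 <= A -> exp A - 1 <= A * exp A.
Proof.
  intros HA. assert (E := exp_ineq1_le (- A)). rewrite exp_Ropp in E.
  assert (0 < exp A) by apply exp_pos.
  apply Rmult_le_compat_r with (r := exp A) in E; [|lra].
  rewrite Rinv_l in E by lra. nra.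
Qed.

Lemma qp_close1 x p n : Cmod p < 1 ->
  Cmod (qpoch x p n - 1) <= Cmod x / (1 - Cmod p) * exp (Cmod x / (1 - Cmod p)).
Proof.
  intros Hp. eapply Rle_trans. apply qp_close_aux.
  set (A := Cmod x / (1 - Cmod p)).
  set (B := rsum (fun i => Cmod x * Cmod p ^ i) n).
  assert (HB : 0 <= B <= A).
  { unfold B, A. rewrite rsum_scal. split.
    apply Rmult_le_pos. apply Cmod_ge0. apply rsum_nonneg. intros; apply pow_le; apply Cmod_ge0.
    unfold Rdiv. apply Rmult_le_compat_l. apply Cmod_ge0. apply rsum_geom. split; auto. apply Cmod_ge0. }
  destruct (rprod_exp (fun i => Cmod x * Cmod p ^ i) n) as [_ H1].
  { intros k. apply Rmult_le_pos. apply Cmod_ge0. apply pow_le; apply Cmod_ge0. }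
  fold B in H1.
  assert (H2 := exp_minus1_le B ltac:(lra)).
  assert (exp B <= exp A) by (apply exp_mono; lra).
  assert (0 < exp B) by apply exp_pos. nra.
Qed.

End B2.
Import B2.

Module B3.
Local Open Scope C_scope.
Local Open Scope R_scope.

Lemma sum_n_rsum (f : nat -> R) n : sum_n f n = rsum f (S n).
Proof.
  induction n. rewrite sum_O. simpl. ring.
  rewrite sum_Sn, IHn. reflexivity.
Qed.

Lemma rsum_split f m n : rsum f (m + n) = rsum f m + rsum (fun k => f (m + k)%nat) n.
Proof. induction n; simpl. rewrite Nat.add_0_r. ring.
  rewrite Nat.add_succ_r. simpl. rewrite IHn. ring. Qed.

Lemma cvC_incr u L k : cvC (fun n => u (n + k)%nat) L -> cvC u L.
Proof. unfold cvC. intros H. apply (is_lim_seq_incr_n (fun n => Cmod (u n - L)) k). auto. Qed.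

Lemma is_series_cvC (a : nat -> C) G : is_series a G -> cvC (fun n => ssum a n) G.
Proof.
  intros H. apply cvC_incr with 1%nat. apply filterlim_cvC.
  eapply filterlim_ext. 2: apply H. intros n. simpl. rewrite sum_n_ssum.
  replace (n + 1)%nat with (S n) by lia. reflexivity.
Qed.

Lemma rsum_le_series (Mb : nat -> R) SM n : (forall k, 0 <= Mb k) -> is_series Mb SM ->
  rsum Mb n <= SM.
Proof.
  intros Hp H.
  assert (Hl : is_lim_seq (fun m => rsum Mb (S m)) SM).
  { eapply is_lim_seq_ext. 2: exact H. intros m. apply sum_n_rsum. }
  assert (T := is_lim_seq_le_loc (fun _ => rsum Mb n) (fun m => rsum Mb (S m)) (Finite (rsum Mb n)) SM).
  apply T; auto. 2: apply is_lim_seq_const.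
  exists n. intros m Hm. cbv beta. replace (S m) with (n + (S m - n))%nat by lia.
  rewrite rsum_split. assert (0 <= rsum (fun k => Mb (n + k)%nat) (S m - n)) by (apply rsum_nonneg; auto).
  lra.
Qed.

Lemma qp_conv x p : Cmod p < 1 -> exists L, cvC (fun n => qpoch x p n) L.
Proof.
  intros Hp.
  set (d := fun j => (qpoch x p (S j) - qpoch x p j)%C).
  set (E := exp (Cmod x / (1 - Cmod p))).
  assert (Hd : ex_series d).
  { apply (@ex_series_le C_AbsRing C_CompleteNormedModule d (fun j => E * Cmod x * Cmod p ^ j)).
    - intros j. change (Cmod (d j) <= E * Cmod x * Cmod p ^ j). unfold d.
      simpl. replace (qpoch x p j * (1 - x * p ^ j) - qpoch x p j)%C with
        (- (qpoch x p j * (x * p ^ j)))%C by ring.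
      rewrite Cmod_opp, !Cmod_mult, Cmod_pow.
      rewrite Rmult_assoc. apply Rmult_le_compat_r.
      apply Rmult_le_pos. apply Cmod_ge0. apply pow_le; apply Cmod_ge0.
      apply qp_upper; auto.
    - apply (@ex_series_scal_l R_AbsRing R_NormedModule (E * Cmod x)).
      apply ex_series_geom. rewrite Rabs_pos_eq; auto. apply Cmod_ge0. }
  destruct Hd as [L HL]. exists (1 + L)%C.
  apply is_series_cvC in HL.
  eapply cvC_ext. 2: apply (cvC_plus (fun _ => 1%C) _ 1%C L (cvC_const 1%C) HL).
  intros n. cbv beta.
  clear HL. induction n. simpl. ring.
  simpl ssum. rewrite Cplus_assoc, IHn. unfold d. ring.
Qed.

End B3.
Import B3.

Module B4.
Local Open Scope C_scope.
Local Open Scope R_scope.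

Lemma tannery (f : nat -> nat -> C) (g : nat -> C) (Mb : nat -> R) SM G :
  (forall k, cvC (fun N => f N k) (g k)) ->
  (forall N k, (k <= N)%nat -> Cmod (f N k) <= Mb k) ->
  is_series Mb SM -> is_series g G ->
  cvC (fun N => ssum (f N) (S N)) G.
Proof.
  intros Hf HM HS HG.
  assert (Mpos : forall k, 0 <= Mb k).
  { intros k. eapply Rle_trans. apply Cmod_ge0. apply (HM k k). lia. }
  assert (gle : forall k, Cmod (g k) <= Mb k).
  { intros k. apply cvC_le with (fun N => f N k). auto. exists k. intros N HN. apply HM; lia. }
  set (T := fun K => SM - rsum Mb K).
  assert (Tlim : is_lim_seq T 0).
  { unfold T. replace (Finite 0) with (Finite (SM - SM)) by (f_equal; ring).
    apply is_lim_seq_minus'. apply is_lim_seq_const.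
    apply (is_lim_seq_incr_n _ 1).
    eapply is_lim_seq_ext. 2: exact HS. intros m. rewrite sum_n_rsum. f_equal. lia. }
  assert (Trange : forall K m, rsum (fun k => Mb (K + k)%nat) m <= T K).
  { intros K m. unfold T. assert (H := rsum_le_series Mb SM (K + m) Mpos HS).
    rewrite rsum_split in H. lra. }
  assert (gtail : forall K, Cmod (G - ssum g K) <= T K).
  { intros K. apply cvC_le with (fun n => (ssum g n - ssum g K)%C).
    - apply cvC_plus. apply is_series_cvC; auto. apply cvC_const.
    - exists K. intros n Hn. replace n with (K + (n - K))%nat by lia.
      rewrite ssum_split. replace (ssum g K + ssum (fun k => g (K + k)%nat) (n - K) - ssum g K)%C
        with (ssum (fun k => g (K + k)%nat) (n - K)) by ring.
      eapply Rle_trans. apply Cmod_ssum. eapply Rle_trans. 2: apply (Trange K (n - K)%nat).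
      apply rsum_le. intros; apply gle. }
  unfold cvC. apply is_lim_seq_spec. intros eps.
  apply is_lim_seq_spec in Tlim.
  destruct (Tlim (mkposreal (eps / 4) ltac:(destruct eps; simpl; lra))) as [K HK].
  specialize (HK K (le_n K)). simpl in HK. rewrite Rminus_0_r in HK.
  assert (TK0 : 0 <= T K) by (unfold T; assert (H := rsum_le_series Mb SM K Mpos HS); lra).
  rewrite Rabs_pos_eq in HK by auto.
  assert (X := cvC_ssum f g K (fun k _ => Hf k)).
  unfold cvC in X. apply is_lim_seq_spec in X.
  destruct (X (mkposreal (eps / 4) ltac:(destruct eps; simpl; lra))) as [N1 HN1].
  exists (Nat.max N1 K). intros N HN.
  specialize (HN1 N ltac:(lia)). simpl in HN1. rewrite Rminus_0_r, Rabs_pos_eq in HN1 by apply Cmod_ge0.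
  rewrite Rminus_0_r, Rabs_pos_eq by apply Cmod_ge0.
  replace (S N) with (K + (S N - K))%nat by lia.
  rewrite ssum_split.
  set (m := (S N - K)%nat).
  replace (ssum (f N) K + ssum (fun k => f N (K + k)%nat) m - G)%C with
    ((ssum (f N) K - ssum g K) + ssum (fun k => f N (K + k)%nat) m + - (G - ssum g K))%C by ring.
  eapply Rle_lt_trans. apply Cmod_triangle. rewrite Cmod_opp.
  eapply Rle_lt_trans. apply Rplus_le_compat_r. apply Cmod_triangle.
  assert (B : Cmod (ssum (fun k => f N (K + k)%nat) m) <= T K).
  { eapply Rle_trans. apply Cmod_ssum. eapply Rle_trans. 2: apply (Trange K m).
    apply rsum_le. intros k Hk. apply HM. unfold m in Hk. lia. }
  assert (C2 := gtail K).
  destruct eps as [e He]. simpl in *. lra.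
Qed.

End B4.
Import B4.

Module B5.
Local Open Scope C_scope.
Local Open Scope R_scope.

Lemma lt1_neq1 (z : C) : Cmod z < 1 -> z <> 1%C.
Proof. intros H E. subst. rewrite Cmod_1 in H. lra. Qed.

Lemma prefix_lb (x : nat -> R) K d : (forall n, 0 < x n) -> 0 < d ->
  (forall n, (K <= n)%nat -> d <= x n) -> exists d', 0 < d' /\ forall n, d' <= x n.
Proof.
  revert d. induction K; intros d Hx Hd H.
  - exists d. split; auto. intros n; apply H; lia.
  - apply (IHK (Rmin d (x K))); auto. apply Rmin_pos; auto.
    intros n Hn. destruct (Nat.eq_dec n K). subst. apply Rmin_r.
    eapply Rle_trans. apply Rmin_l. apply H. lia.
Qed.

Lemma geom_lim t r : 0 <= t < 1 -> is_lim_seq (fun N => t ^ (N - r)) 0.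
Proof.
  intros Ht. apply (is_lim_seq_incr_n _ r).
  eapply is_lim_seq_ext. 2: apply is_lim_seq_geom. intros n. cbv beta.
  f_equal. lia. rewrite Rabs_pos_eq; lra.
Qed.

Lemma cvC_unique u L M : cvC u L -> cvC u M -> L = M.
Proof.
  intros H1 H2.
  assert (H := cvC_plus _ _ _ _ H1 (cvC_ext _ _ _ (fun n => eq_refl) (cvC_mult _ _ _ _ (cvC_const (-1)%C) H2))).
  cbv beta in H.
  assert (Hle : Cmod (L + -1 * M) <= 0).
  { apply cvC_le with (1 := H). exists O. intros n _.
    replace (u n + -1 * u n)%C with (RtoC 0) by ring. rewrite Cmod_0. lra. }
  assert (Cmod (L + -1 * M) = 0) by (assert (T := Cmod_ge0 (L + -1 * M)); lra).
  apply Cmod_eq_0 in H0.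
  replace L with ((L + -1 * M) + M)%C by ring. rewrite H0. ring.
Qed.

Lemma qpoch_inf_eq x p P : cvC (fun n => qpoch x p n) P -> qpoch_inf x p = P.
Proof.
  intros H. unfold qpoch_inf.
  rewrite (is_lim_seq_unique _ _ (cvC_fst _ _ H)), (is_lim_seq_unique _ _ (cvC_snd _ _ H)).
  destruct P; reflexivity.
Qed.

Lemma qp_to1 (y : nat -> C) p r : Cmod p < 1 -> is_lim_seq (fun N => Cmod (y N)) 0 ->
  eventually (fun N => Cmod (y N) <= 1) -> cvC (fun N => qpoch (y N) p r) 1%C.
Proof.
  intros Hp Hy Ev.
  set (K := exp (1 / (1 - Cmod p)) / (1 - Cmod p)).
  apply cvC_bound_loc with (fun N => Cmod (y N) * K).
  - destruct Ev as [N0 HN0]. exists N0. intros N HN. specialize (HN0 N HN).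
    eapply Rle_trans. apply qp_close1; auto.
    assert (0 < 1 - Cmod p) by lra.
    assert (0 <= Cmod (y N)) by apply Cmod_ge0.
    unfold K. unfold Rdiv.
    assert (exp (Cmod (y N) * / (1 - Cmod p)) <= exp (1 * / (1 - Cmod p))).
    { apply exp_mono. apply Rmult_le_compat_r. left; apply Rinv_0_lt_compat; lra. auto. }
    assert (0 < / (1 - Cmod p)) by (apply Rinv_0_lt_compat; lra).
    replace (Cmod (y N) * (exp (1 * / (1 - Cmod p)) * / (1 - Cmod p))) with
      (Cmod (y N) * / (1 - Cmod p) * exp (1 * / (1 - Cmod p))) by ring.
    apply Rmult_le_compat_l. nra. auto.
  - replace (Finite 0) with (Finite (0 * K)) by (f_equal; ring).
    apply is_lim_seq_mult'. auto. apply is_lim_seq_const.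
Qed.

Lemma tail_lb x p : 0 < Cmod p < 1 -> (forall k, qpoch x p k <> 0%C) ->
  exists d, 0 < d /\ forall n, d <= Cmod (qpoch x p n).
Proof.
  intros Hp Hx.
  set (LQ := exp (- (Cmod p / (1 - Cmod p) / (1 - Cmod p)))).
  assert (HK : exists K, Cmod x * Cmod p ^ K <= Cmod p).
  { destruct (Req_dec (Cmod x) 0) as [E|E].
    - exists O. rewrite E. lra.
    - assert (0 < Cmod x) by (assert (T := Cmod_ge0 x); lra).
      destruct (pow_lt_1_zero (Cmod p) ltac:(rewrite Rabs_pos_eq; lra) (Cmod p / Cmod x)
        ltac:(apply Rdiv_lt_0_compat; lra)) as [K HK].
      exists K. specialize (HK K (le_n K)). rewrite Rabs_pos_eq in HK by (apply pow_le; lra).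
      apply Rmult_lt_compat_l with (r := Cmod x) in HK; auto.
      replace (Cmod x * (Cmod p / Cmod x)) with (Cmod p) in HK by (field; lra). lra. }
  destruct HK as [K HK].
  apply prefix_lb with K (Cmod (qpoch x p K) * LQ).
  - intros n. apply Cmod_gt_0. auto.
  - apply Rmult_lt_0_compat. apply Cmod_gt_0; auto. apply exp_pos.
  - intros n Hn. replace n with (K + (n - K))%nat by lia. rewrite qpoch_add, Cmod_mult.
    apply Rmult_le_compat_l. apply Cmod_ge0.
    assert (HC : Cmod (x * p ^ K) <= Cmod p) by (rewrite Cmod_mult, Cmod_pow; auto).
    eapply Rle_trans. 2: apply (qp_lower (x * p ^ K) p (n - K) (Cmod p)); [auto | lra | lra].
    unfold LQ. apply exp_mono. apply Ropp_le_contravar.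
    assert (0 < / (1 - Cmod p)) by (apply Rinv_0_lt_compat; lra).
    unfold Rdiv. apply Rmult_le_compat_r. lra. apply Rmult_le_compat_r. lra. auto.
Qed.

End B5.
Import B5.

Module B6.
Local Open Scope C_scope.
Local Open Scope R_scope.

Section Fin.
Variables q a c : C.
Hypothesis Hq0 : 0 < Cmod q.
Hypothesis Hq1 : Cmod q < 1.
Hypothesis Ha : a <> 0%C.
Hypothesis Hc : c <> 0%C.
Hypothesis Hac : Cmod (a * c) < Cmod q ^ 2.

Local Notation Q := (q ^ 2)%C.
Local Notation t := (Cmod q).

Lemma CmQ : Cmod Q = t ^ 2.
Proof. apply Cmod_pow. Qed.

Lemma CmQ_lt : 0 < Cmod Q < 1.
Proof. rewrite CmQ. split. apply pow_lt; auto.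
  assert (0 <= t) by apply Cmod_ge0. nra. Qed.

Lemma pow_lt1 (x : R) j : 0 <= x < 1 -> x ^ j <= 1.
Proof. intros. apply pow_le1. lra. Qed.

Lemma nzQ : forall k, qpoch Q Q k <> 0%C.
Proof.
  intros k. apply qpoch_nz. intros j _. apply lt1_neq1.
  rewrite Cmod_mult, (Cmod_pow Q j). assert (H := CmQ_lt).
  assert (Cmod Q ^ j <= 1) by (apply pow_lt1; lra).
  assert (0 <= Cmod Q ^ j) by (apply pow_le; lra). nra.
Qed.

Lemma nzq1 : forall k, qpoch q Q k <> 0%C.
Proof.
  intros k. apply qpoch_nz. intros j _. apply lt1_neq1.
  rewrite Cmod_mult, (Cmod_pow Q j). assert (H := CmQ_lt).
  assert (Cmod Q ^ j <= 1) by (apply pow_lt1; lra).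
  assert (0 <= Cmod Q ^ j) by (apply pow_le; lra). nra.
Qed.

Lemma nzmq : forall k, qpoch (- q) q k <> 0%C.
Proof.
  intros k. apply qpoch_nz. intros j _. apply lt1_neq1.
  rewrite Cmod_mult, Cmod_pow, Cmod_opp.
  assert (t ^ j <= 1) by (apply pow_lt1; split; [apply Cmod_ge0|lra]).
  assert (0 <= t ^ j) by (apply pow_le; apply Cmod_ge0). nra.
Qed.

Lemma tau_bound s : Cmod (tau q s) <= 2 * t ^ s.
Proof.
  destruct s. simpl. rewrite Cmod_1. lra.
  unfold tau. rewrite !Cmod_mult, !Cmod_pow.
  replace (Cmod (-1)) with 1 by (rewrite Cmod_R; unfold Rabs; destruct Rcase_abs; lra). rewrite pow1.
  replace (Cmod 2) with 2 by (rewrite Cmod_R; rewrite Rabs_pos_eq; lra).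
  assert (t ^ (S s * S s) <= t ^ S s).
  { apply pow_decr. split; [apply Cmod_ge0|lra]. nia. }
  lra.
Qed.

Lemma T_bound r : Cmod (ssum (tau q) (S r)) <= 2 / (1 - t).
Proof.
  eapply Rle_trans. apply Cmod_ssum. eapply Rle_trans.
  apply rsum_le with (g := fun s => 2 * t ^ s). intros; apply tau_bound.
  rewrite rsum_scal. unfold Rdiv. apply Rmult_le_compat_l. lra.
  apply rsum_geom. split; [apply Cmod_ge0 | lra].
Qed.

Lemma ww_bound r : Cmod (ww q r) <= 2 * (2 / (1 - t)) / Cmod Q ^ r.
Proof.
  unfold ww. assert (H := CmQ_lt).
  assert (HQr : 0 < Cmod Q ^ r) by (apply pow_lt; lra).
  assert (HQr' : (Q ^ r)%C <> 0%C) by (apply Cpow_nz; intro E; rewrite E, Cmod_0 in H; lra).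
  rewrite Cmod_mult, Cmod_div by auto. rewrite (Cmod_pow Q r).
  assert (H1 : Cmod (1 - Q ^ S (2 * r)) <= 2).
  { eapply Rle_trans. apply Cmod_1_minus. rewrite (Cmod_pow Q).
    assert (Cmod Q ^ S (2 * r) <= 1) by (apply pow_lt1; lra). lra. }
  assert (H2 := T_bound r).
  assert (0 <= Cmod (ssum (tau q) (S r))) by apply Cmod_ge0.
  assert (0 <= Cmod (1 - Q ^ S (2 * r))) by apply Cmod_ge0.
  set (X := Cmod (1 - Q ^ S (2 * r))) in *. set (Y := Cmod (ssum (tau q) (S r))) in *.
  set (Z := Cmod Q ^ r) in *.
  unfold Rdiv. replace (X * / Z * Y) with (X * Y * / Z) by ring.
  apply Rmult_le_compat_r. left; apply Rinv_0_lt_compat; auto.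
  apply Rmult_le_compat; auto.
Qed.


Hypothesis HQa : forall k, qpoch (Q * a) Q k <> 0%C.
Hypothesis HQc : forall k, qpoch (Q * c) Q k <> 0%C.

Definition rho := Cmod (a * c) / Cmod Q.

Lemma rho_lt : 0 <= rho < 1.
Proof.
  unfold rho. assert (H := CmQ_lt). rewrite CmQ in *. split.
  apply Rdiv_le_0_compat. apply Cmod_ge0. lra.
  apply Rmult_lt_reg_r with (t ^ 2). lra. unfold Rdiv. rewrite Rmult_assoc, Rinv_l by lra. lra.
Qed.

Lemma rho_pow r : rho ^ r = Cmod (a * c) ^ r / Cmod Q ^ r.
Proof. unfold rho, Rdiv. rewrite Rpow_mult_distr, pow_inv. reflexivity. Qed.

Lemma Rdiv_le_compat x X y Y : 0 <= x <= X -> 0 < Y <= y -> x / y <= X / Y.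
Proof.
  intros Hx Hy. unfold Rdiv. apply Rmult_le_compat; try lra.
  left; apply Rinv_0_lt_compat; lra. apply Rinv_le_contravar; lra.
Qed.

Lemma lhs_bound : exists CL, forall r, Cmod (lhs_term q a c r) <= CL * rho ^ r.
Proof.
  assert (Hq : q <> 0%C) by (apply Cmod_gt_0; auto).
  assert (HQl := CmQ_lt).
  destruct (tail_lb (Q * a) Q HQl HQa) as [da [Hda Hda']].
  destruct (tail_lb (Q * c) Q HQl HQc) as [dc [Hdc Hdc']].
  set (Ea := exp (Cmod (Q / a) / (1 - Cmod Q))).
  set (Ec := exp (Cmod (Q / c) / (1 - Cmod Q))).
  exists (2 * (2 / (1 - t)) * (Ea * Ec) / (da * dc)).
  intros r. rewrite (lhs_term_eq q a c Hq HQa HQc r). cbv beta.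
  rewrite Cmod_mult.
  assert (HW := ww_bound r).
  assert (HF : Cmod (qpoch (Q / a) Q r * qpoch (Q / c) Q r * (a * c) ^ r /
       (qpoch (Q * a) Q r * qpoch (Q * c) Q r)) <= Ea * Ec * Cmod (a * c) ^ r / (da * dc)).
  { rewrite Cmod_div by (apply Cmult_neq_0; auto). rewrite !Cmod_mult, Cmod_pow.
    rewrite <- (Cmod_mult a c).
    apply Rdiv_le_compat.
    - split. repeat apply Rmult_le_pos; try apply Cmod_ge0; apply pow_le; apply Cmod_ge0.
      apply Rmult_le_compat_r. apply pow_le; apply Cmod_ge0.
      apply Rmult_le_compat; try apply Cmod_ge0. apply qp_upper. apply HQl. apply qp_upper; apply HQl.
    - split. apply Rmult_lt_0_compat; auto. apply Rmult_le_compat; try lra; auto. }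
  eapply Rle_trans. apply Rmult_le_compat; try apply Cmod_ge0. apply HW. apply HF.
  rewrite rho_pow. assert (0 < Cmod Q ^ r) by (apply pow_lt; lra).
  right. field. repeat split; lra.
Qed.

Lemma rhs_bound : exists C0, forall k, Cmod (rhs_term q a c k) <= C0 * rho ^ k.
Proof.
  assert (Hq : q <> 0%C) by (apply Cmod_gt_0; auto).
  assert (HQl := CmQ_lt).
  set (Ea := exp (Cmod (Q / a) / (1 - Cmod Q))).
  set (Ec := exp (Cmod (Q / c) / (1 - Cmod Q))).
  set (Eq := exp (Cmod q / (1 - Cmod Q))).
  set (Lq := exp (- (Cmod (- q) / (1 - t) / (1 - t)))).
  set (LQ := exp (- (Cmod Q / (1 - Cmod Q) / (1 - Cmod Q)))).
  exists (Ea * Ec * Eq / (Lq * LQ)).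
  intros k. unfold rhs_term.
  assert (HQ0 : Q <> 0%C) by (intro E; rewrite E, Cmod_0 in HQl; lra).
  rewrite Cmod_mult, Cmod_div by (apply Cmult_neq_0; [apply nzmq | apply nzQ]).
  rewrite Cmod_pow, Cmod_div by auto. fold rho.
  apply Rmult_le_compat_r. apply pow_le. apply rho_lt.
  rewrite !Cmod_mult. apply Rdiv_le_compat.
  - split. repeat apply Rmult_le_pos; apply Cmod_ge0.
    repeat apply Rmult_le_compat; try apply Cmod_ge0; try (apply Rmult_le_pos; apply Cmod_ge0);
      apply qp_upper; lra.
  - split. apply Rmult_lt_0_compat; apply exp_pos.
    apply Rmult_le_compat; try (left; apply exp_pos).
    + apply qp_lower. rewrite Cmod_opp. lra. lra. lra.
    + apply qp_lower; lra.
Qed.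


Definition uu N r := (qpoch Q Q N * qpoch Q Q (S N) / (qpoch Q Q (N - r) * qpoch Q Q (S (N + r))))%C.
Definition vv N k := (qpoch (a * c) Q (N - k) * qpoch Q Q N / qpoch Q Q (N - k))%C.

Lemma cvC_eqL u L M : cvC u L -> L = M -> cvC u M.
Proof. intros H E; subst; auto. Qed.

Lemma uu_eq N r : (r <= N)%nat ->
  uu N r = (qpoch (Q * Q ^ (N - r)) Q r / qpoch (Q * Q ^ (S N)) Q r)%C.
Proof.
  intros Hr. unfold uu.
  assert (E1 : qpoch Q Q N = (qpoch Q Q (N - r) * qpoch (Q * Q ^ (N - r)) Q r)%C).
  { rewrite <- qpoch_add. f_equal. lia. }
  assert (E2 : qpoch Q Q (S (N + r)) = (qpoch Q Q (S N) * qpoch (Q * Q ^ (S N)) Q r)%C).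
  { rewrite <- qpoch_add. f_equal. }
  assert (H3 := nzQ (S N + r)). rewrite qpoch_add in H3. apply Cmult_neq_0_inv in H3.
  destruct H3 as [H3 H4].
  assert (H5 := nzQ (N - r)).
  rewrite E1, E2. field. repeat split; auto.
Qed.

Lemma CmQQ j : Cmod (Q * Q ^ j) = Cmod Q * Cmod Q ^ j.
Proof. rewrite Cmod_mult, (Cmod_pow Q). reflexivity. Qed.

Lemma CmQQ_le j : Cmod (Q * Q ^ j) <= Cmod Q.
Proof. rewrite CmQQ. assert (H := CmQ_lt). assert (Cmod Q ^ j <= 1) by (apply pow_lt1; lra).
  assert (0 <= Cmod Q ^ j) by (apply pow_le; lra). nra. Qed.

Definition EQ := exp (1 / (1 - Cmod Q)).
Definition LQ := exp (- (Cmod Q / (1 - Cmod Q) / (1 - Cmod Q))).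

Lemma qp_upper1 x n : Cmod x <= 1 -> Cmod (qpoch x Q n) <= EQ.
Proof.
  intros Hx. assert (H := CmQ_lt). eapply Rle_trans. apply qp_upper. lra.
  unfold EQ. apply exp_mono. unfold Rdiv. apply Rmult_le_compat_r.
  left; apply Rinv_0_lt_compat; lra. auto.
Qed.

Lemma qp_lower1 x n : Cmod x <= Cmod Q -> LQ <= Cmod (qpoch x Q n).
Proof.
  intros Hx. assert (H := CmQ_lt). eapply Rle_trans. 2: apply (qp_lower x Q n (Cmod Q)); lra.
  unfold LQ. apply exp_mono. apply Ropp_le_contravar. unfold Rdiv.
  assert (0 < / (1 - Cmod Q)) by (apply Rinv_0_lt_compat; lra).
  apply Rmult_le_compat_r. lra. apply Rmult_le_compat_r. lra. auto.
Qed.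

Lemma uu_bound N r : (r <= N)%nat -> Cmod (uu N r) <= EQ / LQ.
Proof.
  intros Hr. rewrite uu_eq by auto. assert (H := CmQ_lt).
  assert (HL : 0 < LQ) by apply exp_pos.
  assert (Hd := qp_lower1 (Q * Q ^ S N) r (CmQQ_le _)).
  rewrite Cmod_div. apply Rdiv_le_compat. split. apply Cmod_ge0.
  apply qp_upper1. assert (T := CmQQ_le (N - r)). lra. lra.
  intro E. rewrite E, Cmod_0 in Hd. lra.
Qed.

Lemma geom_Q_lim (f : nat -> nat) : (forall N, (N - 0 <= f N)%nat) ->
  is_lim_seq (fun N => Cmod (Q * Q ^ (f N))) 0.
Proof.
  intros Hf. assert (H := CmQ_lt).
  apply is_lim_seq_le_le with (fun _ => 0) (fun N => Cmod Q ^ (N - 0)).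
  - intros N. split. apply Cmod_ge0.
    rewrite CmQQ. apply Rle_trans with (Cmod Q ^ f N). 
    assert (0 <= Cmod Q ^ f N) by (apply pow_le; lra). nra.
    apply pow_decr. lra. apply Hf.
  - apply is_lim_seq_const.
  - apply geom_lim. lra.
Qed.

Lemma uu_lim r : cvC (fun N => uu N r) 1%C.
Proof.
  assert (H := CmQ_lt).
  apply cvC_ext_loc with (fun N => qpoch (Q * Q ^ (N - r)) Q r / qpoch (Q * Q ^ (S N)) Q r)%C.
  { exists r. intros N HN. symmetry. apply uu_eq. auto. }
  eapply cvC_eqL. apply cvC_mult. 
  - apply qp_to1. lra.
    { apply is_lim_seq_le_le with (fun _ => 0) (fun N => Cmod Q ^ (N - r)).
    + intros N. split. apply Cmod_ge0. rewrite CmQQ.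
      assert (Cmod Q ^ (N - r) >= 0) by (apply Rle_ge; apply pow_le; lra). nra.
    + apply is_lim_seq_const.
    + apply geom_lim. lra. }
    exists O. intros N _. assert (T := CmQQ_le (N - r)). lra.
  - apply cvC_inv. apply qp_to1. lra.
    apply geom_Q_lim. intros; lia.
    exists O. intros N _. assert (T := CmQQ_le (S N)). lra.
    intro E. injection E. lra.
  - field.
Qed.

Lemma vv_eq N k : (k <= N)%nat ->
  vv N k = (qpoch (a * c) Q (N - k) * qpoch (Q * Q ^ (N - k)) Q k)%C.
Proof.
  intros Hk. unfold vv.
  assert (E1 : qpoch Q Q N = (qpoch Q Q (N - k) * qpoch (Q * Q ^ (N - k)) Q k)%C).
  { rewrite <- qpoch_add. f_equal. lia. }
  rewrite E1. assert (H5 := nzQ (N - k)). field. auto.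
Qed.

Lemma vv_bound N k : (k <= N)%nat ->
  Cmod (vv N k) <= exp (Cmod (a * c) / (1 - Cmod Q)) * EQ.
Proof.
  intros Hk. rewrite vv_eq by auto. assert (H := CmQ_lt). rewrite Cmod_mult.
  apply Rmult_le_compat; try apply Cmod_ge0. apply qp_upper. lra.
  apply qp_upper1. assert (T := CmQQ_le (N - k)). lra.
Qed.

Lemma vv_lim k Pac : cvC (fun n => qpoch (a * c) Q n) Pac -> cvC (fun N => vv N k) Pac.
Proof.
  intros HP. assert (H := CmQ_lt).
  apply cvC_ext_loc with (fun N => qpoch (a * c) Q (N - k) * qpoch (Q * Q ^ (N - k)) Q k)%C.
  { exists k. intros N HN. symmetry. apply vv_eq. auto. }
  eapply cvC_eqL. apply cvC_mult.
  - apply (cvC_unshift (fun n => qpoch (a * c) Q n) Pac k). auto.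
  - apply qp_to1. lra.
    { apply is_lim_seq_le_le with (fun _ => 0) (fun N => Cmod Q ^ (N - k)).
    + intros N. split. apply Cmod_ge0. rewrite CmQQ.
      assert (Cmod Q ^ (N - k) >= 0) by (apply Rle_ge; apply pow_le; lra). nra.
    + apply is_lim_seq_const.
    + apply geom_lim. lra. }
    exists O. intros N _. assert (T := CmQQ_le (N - k)). lra.
  - ring.
Qed.

End Fin.

End B6.
Import B6.


Theorem theorem8p5 (q a c : C) :
  (0 < Cmod q)%R -> (Cmod q < 1)%R ->
  a <> 0 -> c <> 0 ->
  (forall k : nat, q ^ (2 * S k) * a <> 1) ->
  (forall k : nat, q ^ (2 * S k) * c <> 1) ->
  (Cmod (a * c) < Cmod q ^ 2)%R ->
  exists S : C,
    is_series (rhs_term q a c) S /\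
    is_series (lhs_term q a c) (rhs_prefactor q a c * S).
Proof.
  intros H0 H1 Ha Hc Hka Hkc Hac.
  assert (Hq : q <> 0) by (apply Cmod_gt_0; auto).
  assert (HQl := CmQ_lt q H0 H1).
  assert (HQ := nzQ q H0 H1).
  assert (Hq1 := nzq1 q H0 H1).
  assert (Hmq := nzmq q H0 H1).
  assert (Hpw : forall j, q ^ 2 * (q ^ 2) ^ j = q ^ (2 * S j)).
  { intros j. rewrite Cpow_mult_r. reflexivity. }
  assert (HQa : forall k, qpoch (q ^ 2 * a) (q ^ 2) k <> 0).
  { intros k. apply qpoch_nz. intros j _.
    replace (q ^ 2 * a * (q ^ 2) ^ j) with (q ^ (2 * S j) * a) by (rewrite <- Hpw; ring). auto. }
  assert (HQc : forall k, qpoch (q ^ 2 * c) (q ^ 2) k <> 0).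
  { intros k. apply qpoch_nz. intros j _.
    replace (q ^ 2 * c * (q ^ 2) ^ j) with (q ^ (2 * S j) * c) by (rewrite <- Hpw; ring). auto. }
  assert (HQ1 : (Cmod (q ^ 2) < 1)%R) by lra.
  destruct (qp_conv (q ^ 2) (q ^ 2) HQ1) as [PQ HPQ].
  destruct (qp_conv (q ^ 2 * a) (q ^ 2) HQ1) as [Pa HPa].
  destruct (qp_conv (q ^ 2 * c) (q ^ 2) HQ1) as [Pc HPc].
  destruct (qp_conv (a * c) (q ^ 2) HQ1) as [Pac HPac].
  assert (HPa0 : Pa <> 0).
  { destruct (tail_lb (q ^ 2 * a) (q ^ 2) HQl HQa) as [d [Hd Hd']].
    assert (T := cvC_ge _ _ d HPa (ex_intro _ O (fun n _ => Hd' n))).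
    intro E. rewrite E, Cmod_0 in T. lra. }
  assert (HPc0 : Pc <> 0).
  { destruct (tail_lb (q ^ 2 * c) (q ^ 2) HQl HQc) as [d [Hd Hd']].
    assert (T := cvC_ge _ _ d HPc (ex_intro _ O (fun n _ => Hd' n))).
    intro E. rewrite E, Cmod_0 in T. lra. }
  assert (Hrho := rho_lt q a c H0 H1 Hac).
  destruct (lhs_bound q a c H0 H1 HQa HQc) as [CL HCL].
  destruct (rhs_bound q a c H0 H1 Hac) as [C0 HC0].
  set (rho := B6.rho q a c) in *.
  assert (Hgeom : forall C, is_series (fun n => (C * rho ^ n)%R) (C * / (1 - rho))%R).
  { intros C. apply (@is_series_scal_l R_AbsRing R_NormedModule C (fun n => rho ^ n)%R).
    apply is_series_geom. rewrite Rabs_pos_eq; lra. }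
  assert (ExL : ex_series (lhs_term q a c)).
  { apply (@ex_series_le C_AbsRing C_CompleteNormedModule _ (fun n => (CL * rho ^ n)%R)).
    intros n. apply HCL. eexists. apply Hgeom. }
  assert (ExR : ex_series (rhs_term q a c)).
  { apply (@ex_series_le C_AbsRing C_CompleteNormedModule _ (fun n => (C0 * rho ^ n)%R)).
    intros n. apply HC0. eexists. apply Hgeom. }
  destruct ExL as [Lsum HL]. destruct ExR as [Ssum HS].
  exists Ssum. split; auto.
  assert (TL : cvC (fun N => ssum (fun r => lhs_term q a c r * uu q N r) (S N)) Lsum).
  { apply (tannery (fun N r => lhs_term q a c r * uu q N r) (lhs_term q a c)
      (fun r => (EQ q / LQ q * CL) * rho ^ r)%R (EQ q / LQ q * CL * / (1 - rho))%R Lsum).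
    - intros r. eapply cvC_eqL. apply cvC_mult. apply cvC_const. apply uu_lim; auto. ring.
    - intros N r Hr. rewrite Cmod_mult.
      replace (EQ q / LQ q * CL * rho ^ r)%R with ((CL * rho ^ r) * (EQ q / LQ q))%R by ring.
      apply Rmult_le_compat; try apply Cmod_ge0. apply HCL. apply uu_bound; auto.
    - apply Hgeom.
    - auto. }
  assert (TR : cvC (fun N => ssum (fun k => rhs_term q a c k * vv q a c N k) (S N)) (Ssum * Pac)).
  { set (EV := (exp (Cmod (a * c) / (1 - Cmod (q ^ 2))) * EQ q)%R).
    apply (tannery (fun N k => rhs_term q a c k * vv q a c N k) (fun k => rhs_term q a c k * Pac)
      (fun k => (EV * C0) * rho ^ k)%R (EV * C0 * / (1 - rho))%R (Ssum * Pac)).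
    - intros k. apply cvC_mult. apply cvC_const. apply vv_lim; auto.
    - intros N k Hk. rewrite Cmod_mult. 
      replace (EV * C0 * rho ^ k)%R with ((C0 * rho ^ k) * EV)%R by ring.
      apply Rmult_le_compat; try apply Cmod_ge0. apply HC0. apply vv_bound; auto.
    - apply Hgeom.
    - replace (Ssum * Pac) with (Pac * Ssum) by ring.
      eapply is_series_ext. 2: apply (@is_series_scal_l C_AbsRing C_NormedModule Pac _ _ HS).
      intros n. simpl. change (Pac * rhs_term q a c n = rhs_term q a c n * Pac). ring.
      }
  assert (W : cvC (fun N => qpoch (q ^ 2) (q ^ 2) (S N) / (qpoch (q ^ 2 * a) (q ^ 2) N * qpoch (q ^ 2 * c) (q ^ 2) N))
                 (PQ / (Pa * Pc))).
  { apply cvC_mult. 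
    - eapply cvC_ext. 2: apply (cvC_shift _ _ 1 HPQ). intros n. cbv beta. f_equal. lia.
    - apply cvC_inv. apply cvC_mult; auto. apply Cmult_neq_0; auto. }
  assert (TL' := cvC_mult _ _ _ _ W TR).
  assert (E : Lsum = PQ / (Pa * Pc) * (Ssum * Pac)).
  { apply (cvC_unique (fun N => ssum (fun r => lhs_term q a c r * uu q N r) (S N))); auto.
    eapply cvC_ext. 2: apply TL'. intros N. cbv beta. unfold uu, vv.
    symmetry. apply FI; auto. }
  unfold rhs_prefactor.
  rewrite (qpoch_inf_eq _ _ _ HPQ), (qpoch_inf_eq _ _ _ HPa), (qpoch_inf_eq _ _ _ HPc),
    (qpoch_inf_eq _ _ _ HPac).
  replace (PQ * Pac / (Pa * Pc) * Ssum) with Lsum. auto.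
  rewrite E. change (@eq C (PQ / (Pa * Pc) * (Ssum * Pac)) (PQ * Pac / (Pa * Pc) * Ssum)). field. split; auto.
Qed.
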